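(* Let $f(y)=\sum_{k\ge0}\frac{(-y/16)^k}{(k!)^2}$ (so $f(y)=J_0(\tfrac12\sqrt{y})$ for $y\ge0$ and $f(-y^2)=I_0(\tfrac12 y)$). Define, for $(R,u)\in\mathbb{R}^2$ and $s\in\mathbb{R}$, the function $$\chi^\sharp(R,u-s)=\tfrac12\,\mathrm{sgn}(R)\,e^{R/2}f(|u-s|^2-R^2)\mathbf{1}_{|u-s|<|R|}$$ and the measure (for fixed $R$, a measure in $u-s$) $$\chi^\flat(R,u-s)=\tfrac12e^{R/2}(\delta_{u-s=R}+\delta_{u-s=-R})-\tfrac12e^{R/2}\Big(\tfrac12f((u-s)^2-R^2)+2Rf'((u-s)^2-R^2)\Big)\mathbf{1}_{|u-s|<|R|}.$$ Then, in the sense of distributions for $(R,u)\in\mathbb{R}^2$, $\chi^\sharp$ solves $\chi^\sharp_{RR}-\chi^\sharp_{uu}-\chi^\sharp_R=0$ with $\lim_{R\to0}\chi^\sharp(R,\cdot)=0$ and $\lim_{R\to0}\chi^\sharp_R(R,\cdot)=\delta_{u=s}$, and $\chi^\flat$ solves $\chi^\flat_{RR}-\chi^\flat_{uu}-\chi^\flat_R=0$ with $\lim_{R\to0}\chi^\flat(R,\cdot)=\delta_{u=s}$ and $\lim_{R\to0}\chi^\flat_R(R,\cdot)=0$. Moreover $\lim_{R\to-\infty}\chi^\sharp(R,\cdot)=\lim_{R\to-\infty}\chi^\flat(R,\cdot)=0$, and $\chi^\flat(R,u-s)=\chi^\sharp_R(R,u-s)-\chi^\sharp(R,u-s)$.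
   Context: $J_0$ and $I_0$ denote the Bessel and modified Bessel functions of the first kind of order $0$; $\mathbf{1}$ denotes an indicator function. The equation $\eta_{RR}-\eta_{uu}-\eta_R=0$ is the entropy equation $\eta_{\rho\rho}-\rho^{-2}\eta_{uu}=0$ of isothermal gas dynamics ($p(\rho)=\rho$) written in the variable $R=\log\rho$. *)

(* Defs.v *)
From Stdlib Require Import Reals List Factorial.
From Coquelicot Require Import Coquelicot.
Open Scope R_scope.

Definition f_coef (k : nat) : R := (- / 16) ^ k / (INR (fact k)) ^ 2.
Definition f (y : R) : R := PSeries f_coef y.
Definition f' (y : R) : R := Derive f y.

Definition sgn (x : R) : R :=
  if Rlt_dec 0 x then 1 else if Rlt_dec x 0 then -1 else 0.

Definition ind_cone (R0 v : R) : R :=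
  if Rlt_dec (Rabs v) (Rabs R0) then 1 else 0.

Definition int_R (g : R -> R) : R :=
  RInt_gen g (Rbar_locally m_infty) (Rbar_locally p_infty).

Definition chi_sharp (s R0 u : R) : R :=
  / 2 * sgn R0 * exp (R0 / 2) * f ((u - s) ^ 2 - R0 ^ 2) * ind_cone R0 (u - s).

(** NB: the factor sgn R0 is 1 for R0 > 0 (the paper's displayed formula);
    it is needed for R0 < 0 so that chi^flat = chi^sharp_R - chi^sharp. *)
Definition chi_flat_ac (s R0 u : R) : R :=
  - (/ 2 * sgn R0 * exp (R0 / 2)
     * (/ 2 * f ((u - s) ^ 2 - R0 ^ 2) + 2 * R0 * f' ((u - s) ^ 2 - R0 ^ 2)))
  * ind_cone R0 (u - s).

Definition test1 (psi : R -> R) : Prop :=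
  (forall (n : nat) (x : R), ex_derive (Derive_n psi n) x) /\
  (exists M : R, forall x, M < Rabs x -> psi x = 0).

Definition dR (phi : R -> R -> R) : R -> R -> R :=
  fun x y => Derive (fun t => phi t y) x.
Definition du (phi : R -> R -> R) : R -> R -> R :=
  fun x y => Derive (fun t => phi x t) y.

Fixpoint Dw (w : list bool) (phi : R -> R -> R) : R -> R -> R :=
  match w with
  | nil => phi
  | b :: w' => if b then dR (Dw w' phi) else du (Dw w' phi)
  end.

Definition test2 (phi : R -> R -> R) : Prop :=
  (forall (w : list bool) (x y : R),
      ex_derive (fun t => Dw w phi t y) x /\
      ex_derive (fun t => Dw w phi x t) y /\
      continuity_2d_pt (Dw w phi) x y) /\
  (exists M : R, forall x y, M < Rabs x \/ M < Rabs y -> phi x y = 0).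

(** formal adjoint of L = d_RR - d_uu - d_R :  L* phi = phi_RR - phi_uu + phi_R *)
Definition Ladj (phi : R -> R -> R) : R -> R -> R :=
  fun x y => dR (dR phi) x y - du (du phi) x y + dR phi x y.

Definition pair_sharp (s R0 : R) (psi : R -> R) : R :=
  int_R (fun u => chi_sharp s R0 u * psi u).

Definition pair_flat (s R0 : R) (psi : R -> R) : R :=
  / 2 * exp (R0 / 2) * (psi (s + R0) + psi (s - R0))
  + int_R (fun u => chi_flat_ac s R0 u * psi u).

Definition dist_sharp (s : R) (phi : R -> R -> R) : R :=
  int_R (fun R0 => pair_sharp s R0 (phi R0)).
Definition dist_flat (s : R) (phi : R -> R -> R) : R :=
  int_R (fun R0 => pair_flat s R0 (phi R0)).

(* Main.v *)
Require Import Defs.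
From Stdlib Require Import Reals.
From Coquelicot Require Import Coquelicot.
Open Scope R_scope.

From Stdlib Require Import Lra Lia Factorial FunctionalExtensionality List.
Import Defs.
Open Scope R_scope.

Lemma f_coef_nz : forall n, f_coef n <> 0.
Proof.
  intro n. unfold f_coef. apply Rmult_integral_contrapositive_currified.
  apply pow_nonzero. lra. apply Rinv_neq_0_compat. apply pow_nonzero.
  apply not_0_INR. apply fact_neq_0.
Qed.

Lemma f_coef_S : forall n, f_coef (S n) = f_coef n * (- / 16) / (INR (S n))^2.
Proof.
  intro n. unfold f_coef. rewrite fact_simpl, mult_INR.
  assert (INR (S n) <> 0) by (apply not_0_INR; lia).
  assert (INR (fact n) <> 0) by (apply not_0_INR, fact_neq_0).
  simpl pow. field. split; assumption.
Qed.

Lemma f_rad : CV_radius f_coef = p_infty.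
Proof.
  apply CV_radius_infinite_DAlembert. apply f_coef_nz.
  apply is_lim_seq_ext with (fun n => / 16 * / (INR (S n))^2).
  { intro n. rewrite f_coef_S.
    assert (INR (S n) <> 0) by (apply not_0_INR; lia).
    pose proof (f_coef_nz n).
    replace (f_coef n * - / 16 / INR (S n) ^ 2 / f_coef n) with (- (/16 * / (INR (S n))^2))
      by (field; split; assumption).
    rewrite Rabs_Ropp, Rabs_right. reflexivity.
    apply Rle_ge, Rmult_le_pos. lra. apply Rlt_le, Rinv_0_lt_compat, pow_lt, lt_0_INR. lia. }
  replace (Finite 0) with (Rbar_mult (/16) 0) by (simpl; f_equal; ring).
  apply is_lim_seq_scal_l.
  replace (Finite 0) with (Rbar_inv p_infty) by reflexivity.
  apply is_lim_seq_inv; [| discriminate].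
  apply is_lim_seq_ext with (fun n => INR (S n) * INR (S n)).
  intro n; simpl; ring.
  eapply is_lim_seq_mult.
  apply is_lim_seq_incr_1 with (u := INR). apply is_lim_seq_INR.
  apply is_lim_seq_incr_1 with (u := INR). apply is_lim_seq_INR.
  reflexivity.
Qed.

Lemma rad_lt : forall a y, CV_radius a = p_infty -> Rbar_lt (Rabs y) (CV_radius a).
Proof. intros a y H; rewrite H; exact I. Qed.

Definition fc1 := PS_derive f_coef.
Definition fc2 := PS_derive fc1.
Definition fc3 := PS_derive fc2.
Lemma fc1_rad : CV_radius fc1 = p_infty.
Proof. unfold fc1; rewrite CV_radius_derive; apply f_rad. Qed.
Lemma fc2_rad : CV_radius fc2 = p_infty.
Proof. unfold fc2; rewrite CV_radius_derive; apply fc1_rad. Qed.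
Lemma fc3_rad : CV_radius fc3 = p_infty.
Proof. unfold fc3; rewrite CV_radius_derive; apply fc2_rad. Qed.

Definition f2 (y : R) : R := Derive f' y.

Lemma f'_eq : forall y, f' y = PSeries fc1 y.
Proof. intro y. unfold f', f. apply Derive_PSeries, rad_lt, f_rad. Qed.

Lemma f_is_derive : forall y, is_derive f y (f' y).
Proof. intro y. rewrite f'_eq. apply is_derive_PSeries, rad_lt, f_rad. Qed.

Lemma f2_eq : forall y, f2 y = PSeries fc2 y.
Proof.
  intro y. unfold f2. rewrite (Derive_ext _ (PSeries fc1)) by apply f'_eq.
  apply Derive_PSeries, rad_lt, fc1_rad.
Qed.

Lemma f'_is_derive : forall y, is_derive f' y (f2 y).
Proof.
  intro y. rewrite f2_eq. apply is_derive_ext with (PSeries fc1).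
  intro; symmetry; apply f'_eq. apply is_derive_PSeries, rad_lt, fc1_rad.
Qed.

Lemma f2_is_derive : forall y, is_derive f2 y (PSeries fc3 y).
Proof.
  intro y. apply is_derive_ext with (PSeries fc2).
  intro; symmetry; apply f2_eq. apply is_derive_PSeries, rad_lt, fc2_rad.
Qed.

Lemma f_cont : forall y, continuous f y.
Proof. intro y. apply (ex_derive_continuous (K:=R_AbsRing) (V:=R_NormedModule)). eexists; apply f_is_derive. Qed.
Lemma f'_cont : forall y, continuous f' y.
Proof. intro y. apply (ex_derive_continuous (K:=R_AbsRing) (V:=R_NormedModule)). eexists; apply f'_is_derive. Qed.
Lemma f2_cont : forall y, continuous f2 y.
Proof. intro y. apply (ex_derive_continuous (K:=R_AbsRing) (V:=R_NormedModule)). eexists; apply f2_is_derive. Qed.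

Lemma f_0 : f 0 = 1.
Proof.
  unfold f. rewrite PSeries_0. unfold f_coef. simpl. field.
Qed.

Lemma f_ode : forall y, y * f2 y + f' y + / 16 * f y = 0.
Proof.
  intro y. rewrite f2_eq, f'_eq. unfold f.
  rewrite <- PSeries_incr_1, <- PSeries_scal.
  assert (E1 : ex_pseries (PS_incr_1 fc2) y).
  { apply (ex_pseries_incr_1 (V:=R_NormedModule) fc2 y). apply CV_radius_inside, rad_lt, fc2_rad. }
  assert (E2 : ex_pseries fc1 y) by apply CV_radius_inside, rad_lt, fc1_rad.
  assert (E3 : ex_pseries (PS_scal (/16) f_coef) y).
  { apply (ex_pseries_scal (V:=R_NormedModule) (/16) f_coef y). apply Rmult_comm. apply CV_radius_inside, rad_lt, f_rad. }
  rewrite <- PSeries_plus by assumption.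
  rewrite <- PSeries_plus by (try apply ex_pseries_plus; assumption).
  rewrite <- (PSeries_const_0 y).
  apply PSeries_ext. intro n.
  unfold PS_plus, PS_scal, PS_incr_1, fc2, fc1, PS_derive.
  repeat progress change (plus ?a ?b) with (a + b). repeat progress change (scal ?a ?b) with (a * b).
  destruct n as [|n].
  - change zero with 0. rewrite f_coef_S. unfold f_coef. simpl. field.
  - rewrite (f_coef_S (S n)). rewrite (S_INR (S n)).
    assert (0 < INR (S n)) by (apply lt_0_INR; lia).
    field. lra.
Qed.

Lemma cont_eps : forall (h : R -> R) z, continuous h z ->
  forall eps : posreal, exists d : posreal, forall w, Rabs (w - z) < d -> Rabs (h w - h z) < eps.
Proof.
  intros h z H eps.
  destruct (proj1 (filterlim_locally h (h z)) H eps) as [d Hd].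
  exists d. intros w Hw. apply (Hd w). exact Hw.
Qed.

Lemma cont2_comp1 : forall (h : R -> R) (g : R -> R -> R) x y,
  continuous h (g x y) -> continuity_2d_pt g x y ->
  continuity_2d_pt (fun u v => h (g u v)) x y.
Proof.
  intros h g x y Hh Hg eps.
  destruct (cont_eps h _ Hh eps) as [d Hd].
  destruct (Hg d) as [d2 Hd2]. exists d2. intros u v Hu Hv.
  apply Hd. apply Hd2; assumption.
Qed.

Lemma cont2_comp2 : forall (P a b : R -> R -> R) x y,
  continuity_2d_pt P (a x y) (b x y) -> continuity_2d_pt a x y -> continuity_2d_pt b x y ->
  continuity_2d_pt (fun u v => P (a u v) (b u v)) x y.
Proof.
  intros P a b x y HP Ha Hb eps.
  destruct (HP eps) as [d Hd].
  destruct (Ha d) as [da Hda]. destruct (Hb d) as [db Hdb].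
  exists (mkposreal _ (Rmin_stable_in_posreal da db)). simpl. intros u v Hu Hv.
  apply Hd.
  - apply Hda; eapply Rlt_le_trans; eauto; [apply Rmin_l | apply Rmin_l].
  - apply Hdb; eapply Rlt_le_trans; eauto; [apply Rmin_r | apply Rmin_r].
Qed.

Lemma cont2_pow : forall (g : R -> R -> R) n x y, continuity_2d_pt g x y ->
  continuity_2d_pt (fun u v => g u v ^ n) x y.
Proof.
  intros g n x y H. induction n.
  - simpl. apply continuity_2d_pt_const.
  - simpl. apply continuity_2d_pt_mult; assumption.
Qed.

Lemma cont2_snd : forall (g : R -> R -> R) x y, continuity_2d_pt g x y ->
  continuous (fun t => g x t) y.
Proof.
  intros g x y H. apply filterlim_locally. intro eps.
  destruct (H eps) as [d Hd]. exists d. intros t Ht.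
  apply Hd. rewrite Rminus_eq_0, Rabs_R0. apply cond_pos. exact Ht.
Qed.

Lemma cont2_fst : forall (g : R -> R -> R) x y, continuity_2d_pt g x y ->
  continuous (fun t => g t y) x.
Proof.
  intros g x y H. apply filterlim_locally. intro eps.
  destruct (H eps) as [d Hd]. exists d. intros t Ht.
  apply Hd. exact Ht. rewrite Rminus_eq_0, Rabs_R0. apply cond_pos.
Qed.

Lemma cont2_1d : forall (h : R -> R) x y, continuous h x ->
  continuity_2d_pt (fun u v => h u) x y.
Proof.
  intros h x y H. apply (cont2_comp1 h (fun u v => u)). exact H.
  apply continuity_2d_pt_id1.
Qed.

Lemma cont_R_of_ex_derive : forall h x, ex_derive h x -> continuity_pt h x.
Proof.
  intros h x H. apply continuity_pt_filterlim.
  apply (ex_derive_continuous (K:=R_AbsRing) (V:=R_NormedModule)). exact H.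
Qed.

Lemma diff_of_partials : forall (P : R -> R -> R) x y,
  (forall u v, ex_derive (fun t => P t v) u) ->
  ex_derive (fun t => P x t) y ->
  continuity_2d_pt (fun u v => Derive (fun t => P t v) u) x y ->
  differentiable_pt_lim P x y (Derive (fun t => P t y) x) (Derive (fun t => P x t) y).
Proof.
  intros P x y H1 H2 Hc eps.
  assert (He2 : 0 < eps / 2) by (destruct eps; simpl; lra).
  destruct (Hc (mkposreal _ He2)) as [d1 Hd1]. simpl in Hd1.
  assert (Hy := Derive_correct _ _ H2).
  apply is_derive_Reals in Hy.
  destruct (Hy (eps/2) He2) as [d2 Hd2].
  exists (mkposreal _ (Rmin_stable_in_posreal d1 d2)). simpl.
  intros u v Hu Hv.
  set (l1 := Derive (fun t => P t y) x). set (l2 := Derive (fun t => P x t) y).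
  assert (A : Rabs (P u v - P x v - l1 * (u - x)) <= eps/2 * Rabs (u - x)).
  { destruct (MVT_gen (fun t => P t v) x u (fun t => Derive (fun z => P z v) t)) as [c [Hc1 Hc2]].
    - intros; apply Derive_correct, H1.
    - intros; apply cont_R_of_ex_derive, H1.
    - simpl in Hc2. rewrite Hc2.
      replace (Derive (fun z => P z v) c * (u - x) - l1 * (u - x))
        with ((Derive (fun z => P z v) c - l1) * (u - x)) by ring.
      rewrite Rabs_mult. apply Rmult_le_compat_r. apply Rabs_pos.
      apply Rlt_le. unfold l1. apply Hd1.
      + apply Rle_lt_trans with (Rabs (u - x)). 2: eapply Rlt_le_trans; [exact Hu| apply Rmin_l].
        unfold Rmin, Rmax in Hc1. destruct (Rle_dec x u); unfold Rabs;
        repeat destruct Rcase_abs; lra.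
      + eapply Rlt_le_trans; [exact Hv| apply Rmin_l]. }
  assert (B : Rabs (P x v - P x y - l2 * (v - y)) <= eps/2 * Rabs (v - y)).
  { destruct (Req_dec v y) as [E|E].
    - subst v. rewrite !Rminus_eq_0, Rmult_0_r, Rminus_0_r, Rabs_R0. lra.
    - assert (Hh : v - y <> 0) by lra.
      assert (Hh2 : Rabs (v - y) < d2) by (eapply Rlt_le_trans; [exact Hv| apply Rmin_r]).
      specialize (Hd2 (v - y) Hh Hh2).
      replace (y + (v - y)) with v in Hd2 by ring.
      replace (P x v - P x y - l2 * (v - y)) with (((P x v - P x y) / (v - y) - l2) * (v - y))
        by (field; exact Hh).
      rewrite Rabs_mult. apply Rmult_le_compat_r. apply Rabs_pos. apply Rlt_le, Hd2. }
  replace (P u v - P x y - (l1 * (u - x) + l2 * (v - y)))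
    with ((P u v - P x v - l1 * (u - x)) + (P x v - P x y - l2 * (v - y))) by ring.
  eapply Rle_trans. apply Rabs_triang.
  assert (Rabs (u - x) <= Rmax (Rabs (u - x)) (Rabs (v - y))) by apply Rmax_l.
  assert (Rabs (v - y) <= Rmax (Rabs (u - x)) (Rabs (v - y))) by apply Rmax_r.
  assert (0 < eps) by apply cond_pos.
  nra.
Qed.

Definition C1 (P : R -> R -> R) : Prop := forall x y,
  ex_derive (fun t => P t y) x /\ ex_derive (fun t => P x t) y /\
  continuity_2d_pt P x y /\ continuity_2d_pt (dR P) x y /\ continuity_2d_pt (du P) x y.

Lemma C1_diff : forall P x y, C1 P -> differentiable_pt_lim P x y (dR P x y) (du P x y).
Proof.
  intros P x y H. apply diff_of_partials.
  - intros u v; apply H.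
  - apply H.
  - apply H.
Qed.

Lemma C1_chain : forall P (p q : R -> R) R0 dp dq, C1 P ->
  is_derive p R0 dp -> is_derive q R0 dq ->
  is_derive (fun r => P (p r) (q r)) R0 (dR P (p R0) (q R0) * dp + du P (p R0) (q R0) * dq).
Proof.
  intros P p q R0 dp dq H Hp Hq.
  apply is_derive_Reals. apply derivable_pt_lim_comp_2d.
  apply C1_diff, H. apply is_derive_Reals, Hp. apply is_derive_Reals, Hq.
Qed.

Lemma C1_chain_snd : forall P x (q : R -> R) t0 dq, C1 P ->
  is_derive q t0 dq ->
  is_derive (fun t => P x (q t)) t0 (du P x (q t0) * dq).
Proof.
  intros P x q t0 dq H Hq.
  replace (du P x (q t0) * dq) with (scal dq (du P x (q t0))).
  apply (is_derive_comp (fun z => P x z) q).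
  unfold du. apply Derive_correct, H. exact Hq.
  unfold scal; simpl; unfold mult; simpl; ring.
Qed.

Lemma C1_cont2 : forall P x y, C1 P -> continuity_2d_pt P x y.
Proof. intros; apply H. Qed.
Lemma C1_contR : forall P x y, C1 P -> continuity_2d_pt (dR P) x y.
Proof. intros; apply H. Qed.
Lemma C1_contu : forall P x y, C1 P -> continuity_2d_pt (du P) x y.
Proof. intros; apply H. Qed.

Definition yv (x t : R) : R := x ^ 2 * (t ^ 2 - 1).
Definition cc (x : R) : R := / 2 * exp (x / 2).
Definition W (x t : R) : R := cc x * f (yv x t).
Definition WR (x t : R) : R :=
  cc x * (/ 2 * f (yv x t) + 2 * x * (t ^ 2 - 1) * f' (yv x t)).
Definition Wt (x t : R) : R := cc x * (2 * x ^ 2 * t * f' (yv x t)).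
Definition U (x t : R) : R := cc x * (/ 2 * f (yv x t) - 2 * x * f' (yv x t)).
Definition UR (x t : R) : R :=
  cc x * (/ 2 * (/ 2 * f (yv x t) - 2 * x * f' (yv x t))
           + x * (t ^ 2 - 1) * f' (yv x t) - 2 * f' (yv x t)
           - 4 * x ^ 2 * (t ^ 2 - 1) * f2 (yv x t)).

Lemma cc_d : forall x : R, is_derive cc x (cc x / 2).
Proof. intro x. unfold cc. auto_derive. auto. unfold Rdiv. ring. Qed.

Lemma f_comp_d : forall (p : R -> R) (x dp : R), is_derive p x dp ->
  is_derive (fun r => f (p r)) x (f' (p x) * dp).
Proof.
  intros p x dp H. replace (f' (p x) * dp) with (scal dp (f' (p x))).
  apply (is_derive_comp f p). apply f_is_derive. exact H.
  unfold scal; simpl; unfold mult; simpl; ring.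
Qed.

Lemma f'_comp_d : forall (p : R -> R) (x dp : R), is_derive p x dp ->
  is_derive (fun r => f' (p r)) x (f2 (p x) * dp).
Proof.
  intros p x dp H. replace (f2 (p x) * dp) with (scal dp (f2 (p x))).
  apply (is_derive_comp f' p). apply f'_is_derive. exact H.
  unfold scal; simpl; unfold mult; simpl; ring.
Qed.

Lemma yv_dR : forall x t : R, is_derive (fun r => yv r t) x (2 * x * (t ^ 2 - 1)).
Proof. intros. unfold yv. auto_derive. auto. ring. Qed.
Lemma yv_dt : forall x t : R, is_derive (fun s => yv x s) t (2 * x ^ 2 * t).
Proof. intros. unfold yv. auto_derive. auto. ring. Qed.

Lemma ex_f : forall y, ex_derive f y.
Proof. intro y; eexists; apply f_is_derive. Qed.
Lemma ex_f' : forall y, ex_derive f' y.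
Proof. intro y; eexists; apply f'_is_derive. Qed.

Lemma ex_yvR : forall x t : R, ex_derive (fun r => yv r t) x.
Proof. intros; eexists; apply yv_dR. Qed.
Lemma ex_yvt : forall x t : R, ex_derive (fun s => yv x s) t.
Proof. intros; eexists; apply yv_dt. Qed.
Lemma D_yvR : forall x t : R, Derive (fun r => yv r t) x = 2 * x * (t ^ 2 - 1).
Proof. intros; apply is_derive_unique, yv_dR. Qed.
Lemma D_yvt : forall x t : R, Derive (fun s => yv x s) t = 2 * x ^ 2 * t.
Proof. intros; apply is_derive_unique, yv_dt. Qed.

Ltac kd := unfold W, WR, Wt, U, UR, cc; auto_derive;
  [ repeat split; repeat match goal with
     | |- ex_derive (fun z => yv z ?t) ?x => apply (ex_yvR x t)
     | |- ex_derive (fun z => yv ?x z) ?t => apply (ex_yvt x t)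
     | |- ex_derive (fun z => f z) ?y => apply (ex_f y)
     | |- ex_derive (fun z => f' z) ?y => apply (ex_f' y)
     | |- _ /\ _ => split
     | |- True => exact I
    end |
    change (fun x0 : R => f x0) with f; change (fun x0 : R => f' x0) with f';
    change (Derive f) with f'; change (Derive f') with f2;
    rewrite ?D_yvR, ?D_yvt; unfold Rdiv ].

Lemma W_dR : forall x t : R, is_derive (fun r => W r t) x (WR x t).
Proof. intros. kd. field. Qed.
Lemma W_dt : forall x t : R, is_derive (fun s => W x s) t (Wt x t).
Proof. intros. kd. field. Qed.
Lemma U_dR : forall x t : R, is_derive (fun r => U r t) x (UR x t).
Proof. intros. kd. field. Qed.

Lemma cont2_yv : forall x y, continuity_2d_pt yv x y.
Proof.
  intros. unfold yv. apply continuity_2d_pt_mult.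
  apply cont2_pow, continuity_2d_pt_id1.
  apply continuity_2d_pt_minus. apply cont2_pow, continuity_2d_pt_id2.
  apply continuity_2d_pt_const.
Qed.

Lemma cont2_cc : forall x y, continuity_2d_pt (fun u v => cc u) x y.
Proof.
  intros. apply cont2_1d. apply (ex_derive_continuous (K:=R_AbsRing) (V:=R_NormedModule)).
  eexists; apply cc_d.
Qed.

Lemma cont2_fyv : forall x y, continuity_2d_pt (fun u v => f (yv u v)) x y.
Proof. intros. apply cont2_comp1. apply f_cont. apply cont2_yv. Qed.
Lemma cont2_f'yv : forall x y, continuity_2d_pt (fun u v => f' (yv u v)) x y.
Proof. intros. apply cont2_comp1. apply f'_cont. apply cont2_yv. Qed.
Lemma cont2_f2yv : forall x y, continuity_2d_pt (fun u v => f2 (yv u v)) x y.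
Proof. intros. apply cont2_comp1. apply f2_cont. apply cont2_yv. Qed.

Ltac c2 := repeat first [ apply cont2_cc | apply cont2_fyv | apply cont2_f'yv | apply cont2_f2yv
  | apply continuity_2d_pt_plus | apply continuity_2d_pt_minus
  | apply continuity_2d_pt_mult | apply continuity_2d_pt_opp
  | apply continuity_2d_pt_id1 | apply continuity_2d_pt_id2
  | apply cont2_pow | apply continuity_2d_pt_const ].

Lemma cont2_W : forall x y, continuity_2d_pt W x y.
Proof. intros. unfold W. c2. Qed.
Lemma cont2_WR : forall x y, continuity_2d_pt WR x y.
Proof. intros. unfold WR. c2. Qed.
Lemma cont2_Wt : forall x y, continuity_2d_pt Wt x y.
Proof. intros. unfold Wt. c2. Qed.
Lemma cont2_U : forall x y, continuity_2d_pt U x y.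
Proof. intros. unfold U. c2. Qed.
Lemma cont2_UR : forall x y, continuity_2d_pt UR x y.
Proof. intros. unfold UR. c2. Qed.

Lemma isRI_plus : forall (g h : R -> R) a b Ig Ih, is_RInt g a b Ig -> is_RInt h a b Ih ->
  is_RInt (fun t => g t + h t) a b (Ig + Ih).
Proof. intros. exact (is_RInt_plus g h a b Ig Ih H H0). Qed.
Lemma isRI_scal : forall (g : R -> R) a b k Ig, is_RInt g a b Ig ->
  is_RInt (fun t => k * g t) a b (k * Ig).
Proof. intros. exact (is_RInt_scal g a b k Ig H). Qed.

Lemma exRI2 : forall (G : R -> R -> R) x a b, (forall u v, continuity_2d_pt G u v) ->
  ex_RInt (fun t => G x t) a b.
Proof.
  intros G x a b H. apply (ex_RInt_continuous (V:=R_CompleteNormedModule)).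
  intros z _. apply (cont2_snd G x z), H.
Qed.
Lemma isRI2 : forall (G : R -> R -> R) x a b, (forall u v, continuity_2d_pt G u v) ->
  is_RInt (fun t => G x t) a b (RInt (fun t => G x t) a b).
Proof. intros. apply (RInt_correct (V:=R_CompleteNormedModule)), exRI2, H. Qed.

Lemma deriv_param : forall (g gd : R -> R -> R) a b x,
  (forall u v, is_derive (fun z => g z v) u (gd u v)) ->
  (forall u v, continuity_2d_pt gd u v) -> (forall u v, continuity_2d_pt g u v) ->
  is_derive (fun r => RInt (fun t => g r t) a b) x (RInt (fun t => gd x t) a b).
Proof.
  intros g gd a b x Hd Hc Hc0.
  assert (E : forall u v, Derive (fun z => g z v) u = gd u v)
    by (intros; apply is_derive_unique, Hd).
  rewrite <- (RInt_ext (fun t => Derive (fun z => g z t) x)) by (intros; apply E).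
  apply is_derive_RInt_param.
  - apply filter_forall. intros; eexists; apply Hd.
  - intros t _. apply continuity_2d_pt_ext with gd. intros; symmetry; apply E. apply Hc.
  - apply filter_forall. intros; apply exRI2, Hc0.
Qed.

Section Lines.
Variable s : R.

Lemma line_cont : forall (G : R -> R -> R), (forall u v, continuity_2d_pt G u v) ->
  forall x t, continuity_2d_pt (fun r t => G r (s + r * t)) x t.
Proof.
  intros G H x t. apply (cont2_comp2 G (fun u v => u) (fun u v => s + u * v)).
  apply H. apply continuity_2d_pt_id1.
  apply continuity_2d_pt_plus. apply continuity_2d_pt_const.
  apply continuity_2d_pt_mult. apply continuity_2d_pt_id1. apply continuity_2d_pt_id2.
Qed.

Lemma line_dR : forall G t x, C1 G ->
  is_derive (fun r => G r (s + r * t)) x (dR G x (s + x * t) + t * du G x (s + x * t)).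
Proof.
  intros G t x H.
  replace (dR G x (s + x * t) + t * du G x (s + x * t))
    with (dR G x (s + x * t) * 1 + du G x (s + x * t) * t) by ring.
  apply (C1_chain G (fun r => r) (fun r => s + r * t)). exact H.
  apply (is_derive_id (K:=R_AbsRing)).
  auto_derive. auto. ring.
Qed.

Lemma line_dt : forall G x t, C1 G ->
  is_derive (fun t => G x (s + x * t)) t (x * du G x (s + x * t)).
Proof.
  intros G x t H. rewrite Rmult_comm.
  apply (C1_chain_snd G x (fun t => s + x * t)). exact H.
  auto_derive. auto. ring.
Qed.
End Lines.

Definition Ps (s x : R) (psi : R -> R) : R :=
  x * RInt (fun t => W x t * psi (s + x * t)) (-1) 1.
Definition P1s (s x : R) (psi : R -> R) : R :=
  cc x * (psi (s + x) + psi (s - x)) + x * RInt (fun t => U x t * psi (s + x * t)) (-1) 1.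

Lemma isRI_ext : forall (g h : R -> R) a b l, (forall t : R, g t = h t) ->
  is_RInt g a b l -> is_RInt h a b l.
Proof. intros g h a b l E H. apply (is_RInt_ext g h a b l). intros; apply E. exact H. Qed.

Lemma isd_mult : forall (g h : R -> R) (x dg dh : R), is_derive g x dg -> is_derive h x dh ->
  is_derive (fun r => g r * h r) x (dg * h x + g x * dh).
Proof.
  intros g h x dg dh Hg Hh.
  apply (is_derive_mult (K:=R_AbsRing) g h x dg dh Hg Hh). intros; apply Rmult_comm.
Qed.

Lemma isd_id : forall x : R, is_derive (fun r : R => r) x 1.
Proof. intro x. apply (is_derive_id (K:=R_AbsRing)). Qed.

Lemma W_pm1 : forall x, W x 1 = cc x /\ W x (-1) = cc x.
Proof.
  intro x. unfold W, yv. split; (replace (x ^ 2 * (_ ^ 2 - 1)) with 0 by ring);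
  rewrite f_0; ring.
Qed.

Lemma KA : forall x t, x * WR x t = x * U x t + t * Wt x t.
Proof. intros. unfold WR, U, Wt. ring. Qed.

Ltac c2x := repeat first [ apply cont2_cc | apply cont2_fyv | apply cont2_f'yv | apply cont2_f2yv
  | apply cont2_W | apply cont2_WR | apply cont2_Wt | apply cont2_U | apply cont2_UR
  | apply line_cont; intros; solve [auto]
  | apply continuity_2d_pt_plus | apply continuity_2d_pt_minus
  | apply continuity_2d_pt_mult | apply continuity_2d_pt_opp
  | apply continuity_2d_pt_id1 | apply continuity_2d_pt_id2
  | apply cont2_pow | apply continuity_2d_pt_const ].

Lemma DA : forall s (G : R -> R -> R) x, C1 G ->
  is_derive (fun r => Ps s r (G r)) x (P1s s x (G x) + Ps s x (dR G x)).
Proof.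
  intros s G x HG.
  assert (C0 : forall u v, continuity_2d_pt G u v) by (intros; apply HG).
  assert (CR : forall u v, continuity_2d_pt (dR G) u v) by (intros; apply HG).
  assert (Cu : forall u v, continuity_2d_pt (du G) u v) by (intros; apply HG).
  set (g := fun r t => r * W r t * G r (s + r * t)).
  set (gd := fun r t => (1 * W r t + r * WR r t) * G r (s + r * t)
     + r * W r t * (dR G r (s + r * t) + t * du G r (s + r * t))).
  assert (Hfun : forall r, RInt (fun t => g r t) (-1) 1 = Ps s r (G r)).
  { intro r. unfold Ps, g. apply is_RInt_unique.
    apply (isRI_ext (fun t => r * (W r t * G r (s + r * t)))).
    intros; ring.
    apply isRI_scal. apply (isRI2 (fun r t => W r t * G r (s + r * t))). intros; c2x. }
  apply is_derive_ext with (fun r => RInt (fun t => g r t) (-1) 1). exact Hfun.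
  assert (Hval : RInt (fun t => gd x t) (-1) 1 = P1s s x (G x) + Ps s x (dR G x)).
  { apply is_RInt_unique.
    assert (I1 := isRI2 (fun r t => U r t * G r (s + r * t)) x (-1) 1 ltac:(intros; c2x)).
    assert (I2 := isRI2 (fun r t => W r t * dR G r (s + r * t)) x (-1) 1 ltac:(intros; c2x)).
    assert (I3 : is_RInt (fun t => (1 * W x t + t * Wt x t) * G x (s + x * t)
                   + t * W x t * (x * du G x (s + x * t))) (-1) 1
                   (cc x * (G x (s + x) + G x (s - x)))).
    { set (F := fun t => t * W x t * G x (s + x * t)).
      replace (cc x * (G x (s + x) + G x (s - x))) with (minus (F 1) (F (-1))).
      apply (is_RInt_derive (V:=R_CompleteNormedModule) F).
      - intros t _. unfold F. cbv beta.
        apply (isd_mult (fun r => r * W x r) (fun r => G x (s + x * r))).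
        apply (isd_mult (fun r => r) (fun r => W x r)). apply isd_id. apply W_dt.
        apply line_dt, HG.
      - intros t _.
        apply (cont2_snd (fun x t => (1 * W x t + t * Wt x t) * G x (s + x * t)
                   + t * W x t * (x * du G x (s + x * t))) x t). c2x.
      - unfold F, minus, plus, opp; simpl. destruct (W_pm1 x) as [E1 E2]. rewrite E1, E2.
        replace (s + x * 1) with (s + x) by ring.
        replace (s + x * -1) with (s - x) by ring. ring. }
    apply (isRI_ext (fun t => x * (U x t * G x (s + x * t)) + x * (W x t * dR G x (s + x * t))
             + ((1 * W x t + t * Wt x t) * G x (s + x * t)
                   + t * W x t * (x * du G x (s + x * t))))).
    { intros t. unfold gd. rewrite KA. ring. }
    replace (P1s s x (G x) + Ps s x (dR G x)) with
      (x * RInt (fun t => U x t * G x (s + x * t)) (-1) 1 + x * RInt (fun t => W x t * dR G x (s + x * t)) (-1) 1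
       + cc x * (G x (s + x) + G x (s - x))) by (unfold P1s, Ps; ring).
    apply isRI_plus. apply isRI_plus. apply isRI_scal, I1. apply isRI_scal, I2. exact I3. }
  rewrite <- Hval. apply deriv_param.
  - intros u v. unfold g, gd.
    apply (isd_mult (fun r => r * W r v) (fun r => G r (s + r * v))).
    apply (isd_mult (fun r => r) (fun r => W r v)). apply isd_id. apply W_dR.
    apply line_dR, HG.
  - intros; unfold gd; c2x.
  - intros; unfold g; c2x.
Qed.

Lemma isd_plus : forall (g h : R -> R) (x dg dh : R), is_derive g x dg -> is_derive h x dh ->
  is_derive (fun r => g r + h r) x (dg + dh).
Proof. intros. apply (is_derive_plus g h x dg dh H H0). Qed.
Lemma isd_minus : forall (g h : R -> R) (x dg dh : R), is_derive g x dg -> is_derive h x dh ->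
  is_derive (fun r => g r - h r) x (dg - dh).
Proof. intros. apply (is_derive_minus g h x dg dh H H0). Qed.
Lemma isd_scal : forall (g : R -> R) (k x dg : R), is_derive g x dg ->
  is_derive (fun r => k * g r) x (k * dg).
Proof. intros. apply (is_derive_scal g x k dg H). Qed.

Lemma UR_alt : forall x t, UR x t =
  cc x * (/ 2 * f (yv x t) + 2 * f' (yv x t) + x * (t ^ 2 - 2) * f' (yv x t)).
Proof.
  intros. unfold UR. pose proof (f_ode (yv x t)) as H.
  replace (4 * x ^ 2 * (t ^ 2 - 1) * f2 (yv x t)) with (4 * (yv x t * f2 (yv x t)))
    by (unfold yv; ring).
  replace (yv x t * f2 (yv x t)) with (- f' (yv x t) - / 16 * f (yv x t)) by lra.
  field.
Qed.

Lemma KB1 : forall x t, U x t + x * UR x t - x * U x t = / 2 * W x t + / 2 * t * Wt x t.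
Proof. intros. rewrite UR_alt. unfold U, W, Wt. field. Qed.
Lemma KB2 : forall x t, x * U x t * t + Wt x t = / 2 * t * x * W x t.
Proof. intros. unfold U, W, Wt. field. Qed.

Lemma DB : forall s (G : R -> R -> R) x, C1 G -> C1 (du G) ->
  is_derive (fun r => P1s s r (G r)) x
    (P1s s x (G x) + Ps s x (du (du G) x) + P1s s x (dR G x)).
Proof.
  intros s G x HG HG'.
  assert (C0 : forall u v, continuity_2d_pt G u v) by (intros; apply HG).
  assert (CR : forall u v, continuity_2d_pt (dR G) u v) by (intros; apply HG).
  assert (Cu : forall u v, continuity_2d_pt (du G) u v) by (intros; apply HG).
  assert (Cuu : forall u v, continuity_2d_pt (du (du G)) u v) by (intros; apply HG').
  set (h := fun r t => r * U r t * G r (s + r * t)).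
  set (hd := fun r t => (1 * U r t + r * UR r t) * G r (s + r * t)
     + r * U r t * (dR G r (s + r * t) + t * du G r (s + r * t))).
  assert (Hfun : forall r, cc r * (G r (s + r) + G r (s - r)) + RInt (fun t => h r t) (-1) 1
                  = P1s s r (G r)).
  { intro r. unfold P1s. f_equal. unfold h. apply is_RInt_unique.
    apply (isRI_ext (fun t => r * (U r t * G r (s + r * t)))).
    intros; ring.
    apply isRI_scal. apply (isRI2 (fun r t => U r t * G r (s + r * t))). intros; c2x. }
  apply is_derive_ext with (fun r => cc r * (G r (s + r) + G r (s - r)) + RInt (fun t => h r t) (-1) 1).
  exact Hfun.
  assert (Hval : RInt (fun t => hd x t) (-1) 1 =
      / 2 * cc x * (G x (s + x) + G x (s - x)) - cc x * (du G x (s + x) - du G x (s - x))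
      + x * RInt (fun t => U x t * G x (s + x * t)) (-1) 1
      + x * RInt (fun t => W x t * du (du G) x (s + x * t)) (-1) 1
      + x * RInt (fun t => U x t * dR G x (s + x * t)) (-1) 1).
  { apply is_RInt_unique.
    assert (I1 := isRI2 (fun r t => U r t * G r (s + r * t)) x (-1) 1 ltac:(intros; c2x)).
    assert (I2 := isRI2 (fun r t => W r t * du (du G) r (s + r * t)) x (-1) 1 ltac:(intros; c2x)).
    assert (I4 := isRI2 (fun r t => U r t * dR G r (s + r * t)) x (-1) 1 ltac:(intros; c2x)).
    assert (I3 : is_RInt (fun t => (/ 2 * (1 * W x t + t * Wt x t) * G x (s + x * t)
                   + / 2 * (t * W x t) * (x * du G x (s + x * t)))
                   - (Wt x t * du G x (s + x * t) + W x t * (x * du (du G) x (s + x * t)))) (-1) 1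
                   (/ 2 * cc x * (G x (s + x) + G x (s - x)) - cc x * (du G x (s + x) - du G x (s - x)))).
    { set (F := fun t => / 2 * (t * W x t) * G x (s + x * t) - W x t * du G x (s + x * t)).
      replace (/ 2 * cc x * (G x (s + x) + G x (s - x)) - cc x * (du G x (s + x) - du G x (s - x)))
        with (minus (F 1) (F (-1))).
      apply (is_RInt_derive (V:=R_CompleteNormedModule) F).
      - intros t _. unfold F. cbv beta.
        apply (isd_minus (fun r => / 2 * (r * W x r) * G x (s + x * r)) (fun r => W x r * du G x (s + x * r))).
        apply (isd_mult (fun r => / 2 * (r * W x r)) (fun r => G x (s + x * r))).
        apply (isd_scal (fun r => r * W x r)).
        apply (isd_mult (fun r => r) (fun r => W x r)). apply isd_id. apply W_dt.
        apply line_dt, HG.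
        apply (isd_mult (fun r => W x r) (fun r => du G x (s + x * r))). apply W_dt.
        apply line_dt, HG'.
      - intros t _.
        apply (cont2_snd (fun x t => (/ 2 * (1 * W x t + t * Wt x t) * G x (s + x * t)
                   + / 2 * (t * W x t) * (x * du G x (s + x * t)))
                   - (Wt x t * du G x (s + x * t) + W x t * (x * du (du G) x (s + x * t)))) x t). c2x.
      - unfold F, minus, plus, opp; simpl. destruct (W_pm1 x) as [E1 E2]. rewrite E1, E2.
        replace (s + x * 1) with (s + x) by ring.
        replace (s + x * -1) with (s - x) by ring. field. }
    apply (isRI_ext (fun t => ((/ 2 * (1 * W x t + t * Wt x t) * G x (s + x * t)
                   + / 2 * (t * W x t) * (x * du G x (s + x * t)))
                   - (Wt x t * du G x (s + x * t) + W x t * (x * du (du G) x (s + x * t))))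
             + x * (U x t * G x (s + x * t)) + x * (W x t * du (du G) x (s + x * t))
             + x * (U x t * dR G x (s + x * t)))).
    { intros t. unfold hd.
      assert (K1 := KB1 x t). assert (K2 := KB2 x t).
      replace (1 * U x t + x * UR x t) with (x * U x t + / 2 * W x t + / 2 * t * Wt x t) by lra.
      replace (Wt x t) with (/ 2 * t * x * W x t - x * U x t * t) by lra.
      ring. }
    apply isRI_plus. apply isRI_plus. apply isRI_plus. exact I3.
    apply isRI_scal, I1. apply isRI_scal, I2. apply isRI_scal, I4. }
  assert (Hc : is_derive (fun r => cc r * (G r (s + r) + G r (s - r))) x
     (cc x / 2 * (G x (s + x) + G x (s - x)) + cc x * ((dR G x (s + x) * 1 + du G x (s + x) * 1)
        + (dR G x (s - x) * 1 + du G x (s - x) * (-1))))).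
  { apply (isd_mult cc (fun r => G r (s + r) + G r (s - r))). apply cc_d.
    apply (isd_plus (fun r => G r (s + r)) (fun r => G r (s - r))).
    apply (C1_chain G (fun r => r) (fun r => s + r)). exact HG. apply isd_id.
    auto_derive; auto; ring.
    apply (C1_chain G (fun r => r) (fun r => s - r)). exact HG. apply isd_id.
    auto_derive; auto; ring. }
  replace (P1s s x (G x) + Ps s x (du (du G) x) + P1s s x (dR G x)) with
    ((cc x / 2 * (G x (s + x) + G x (s - x)) + cc x * ((dR G x (s + x) * 1 + du G x (s + x) * 1)
        + (dR G x (s - x) * 1 + du G x (s - x) * (-1)))) + RInt (fun t => hd x t) (-1) 1).
  2: { rewrite Hval. unfold P1s, Ps. field. }
  apply (isd_plus (fun r => cc r * (G r (s + r) + G r (s - r))) (fun r => RInt (fun t => h r t) (-1) 1)).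
  exact Hc.
  apply deriv_param.
  - intros u v. unfold h, hd.
    apply (isd_mult (fun r => r * U r v) (fun r => G r (s + r * v))).
    apply (isd_mult (fun r => r) (fun r => U r v)). apply isd_id. apply U_dR.
    apply line_dR, HG.
  - intros; unfold hd; c2x.
  - intros; unfold h; c2x.
Qed.

Lemma int_R_compact : forall (g h : R -> R) a b l, a <= b ->
  (forall u, u < a \/ b < u -> g u = 0) -> (forall u, a < u < b -> g u = h u) ->
  is_RInt h a b l -> is_RInt_gen g (Rbar_locally m_infty) (Rbar_locally p_infty) l.
Proof.
  intros g h a b l Hab H0 Hin Hh.
  intros P HP. unfold filtermapi.
  exists (fun x => x < a) (fun y => b < y).
  - exists a. auto.
  - exists b. auto.
  - intros x y Hx Hy. exists l. split; [| apply locally_singleton, HP].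
    simpl.
    replace l with (plus (plus zero l) zero).
    2: { unfold plus, zero; simpl. ring. }
    apply (is_RInt_Chasles (V:=R_NormedModule)) with b. apply (is_RInt_Chasles (V:=R_NormedModule)) with a.
    + replace (@zero R_NormedModule) with (scal (a - x) 0).
      2: { unfold scal, zero; simpl. unfold mult; simpl. ring. }
      apply (is_RInt_ext (V:=R_NormedModule) (fun _ => 0)). intros u Hu. symmetry; apply H0.
      left. rewrite Rmax_right in Hu by lra. lra.
      apply (is_RInt_const (V:=R_NormedModule)).
    + apply (is_RInt_ext (V:=R_NormedModule) h). intros u Hu. rewrite Rmin_left, Rmax_right in Hu by lra.
      symmetry; apply Hin; lra. exact Hh.
    + replace (@zero R_NormedModule) with (scal (y - b) 0).
      2: { unfold scal, zero; simpl. unfold mult; simpl. ring. }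
      apply (is_RInt_ext (V:=R_NormedModule) (fun _ => 0)). intros u Hu. symmetry; apply H0.
      right. rewrite Rmin_left in Hu by lra. lra.
      apply (is_RInt_const (V:=R_NormedModule)).
Qed.

Lemma int_R_compact_eq : forall (g h : R -> R) a b l, a <= b ->
  (forall u, u < a \/ b < u -> g u = 0) -> (forall u, a < u < b -> g u = h u) ->
  is_RInt h a b l -> int_R g = l.
Proof.
  intros. unfold int_R. apply is_RInt_gen_unique.
  eapply int_R_compact; eauto.
Qed.

Lemma int_R_ext : forall g h : R -> R, (forall u, g u = h u) -> int_R g = int_R h.
Proof. intros g h H. f_equal. apply functional_extensionality, H. Qed.

Lemma ind_cone_in : forall x v, Rabs v < Rabs x -> ind_cone x v = 1.
Proof. intros. unfold ind_cone. destruct Rlt_dec; [reflexivity| contradiction]. Qed.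
Lemma ind_cone_out : forall x v, ~ Rabs v < Rabs x -> ind_cone x v = 0.
Proof. intros. unfold ind_cone. destruct Rlt_dec; [contradiction| reflexivity]. Qed.

Lemma sgn_pos : forall x, 0 < x -> sgn x = 1.
Proof. intros. unfold sgn. destruct Rlt_dec; [reflexivity| lra]. Qed.
Lemma sgn_neg : forall x, x < 0 -> sgn x = -1.
Proof. intros. unfold sgn. destruct Rlt_dec; [lra|]. destruct Rlt_dec; [reflexivity| lra]. Qed.

Lemma GEN : forall s x (K : R -> R), (forall u, continuous K u) ->
  int_R (fun u => sgn x * K u * ind_cone x (u - s)) = x * RInt (fun t => K (s + x * t)) (-1) 1.
Proof.
  intros s x K HK.
  assert (ExK : forall a b, ex_RInt K a b).
  { intros. apply (ex_RInt_continuous (V:=R_CompleteNormedModule)). intros; apply HK. }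
  set (L := RInt K (s - x) (s + x)).
  assert (Hlin : x * RInt (fun t => K (s + x * t)) (-1) 1 = L).
  { assert (H1 : is_RInt (fun t => x * K (s + x * t)) (-1) 1 L).
    { apply (isRI_ext (fun y => scal x (K (x * y + s)))).
      intro t. unfold scal; simpl; unfold mult; simpl. f_equal. f_equal. ring.
      apply (is_RInt_comp_lin (V:=R_NormedModule)).
      replace (x * -1 + s) with (s - x) by ring. replace (x * 1 + s) with (s + x) by ring.
      apply (RInt_correct (V:=R_CompleteNormedModule)), ExK. }
    assert (E2 : ex_RInt (fun t => K (s + x * t)) (-1) 1).
    { apply (ex_RInt_continuous (V:=R_CompleteNormedModule)). intros z _.
      apply (continuous_comp (fun t => s + x * t) K).
      apply (ex_derive_continuous (K:=R_AbsRing) (V:=R_NormedModule)). auto_derive. auto.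
      apply HK. }
    rewrite <- (is_RInt_unique _ _ _ _ H1).
    apply eq_sym. apply (RInt_scal (V:=R_CompleteNormedModule) (fun t => K (s + x * t))). exact E2. }
  rewrite Hlin.
  destruct (Rlt_dec 0 x) as [Hp | Hnp]; [| destruct (Rlt_dec x 0) as [Hn | Hz]].
  - apply int_R_compact_eq with K (s - x) (s + x). lra.
    + intros u Hu. rewrite ind_cone_out. ring. rewrite (Rabs_right x) by lra.
      unfold Rabs; destruct Rcase_abs; lra.
    + intros u Hu. rewrite ind_cone_in, sgn_pos. ring. exact Hp.
      rewrite (Rabs_right x) by lra. unfold Rabs; destruct Rcase_abs; lra.
    + apply (RInt_correct (V:=R_CompleteNormedModule)), ExK.
  - apply int_R_compact_eq with (fun u => -1 * K u) (s + x) (s - x). lra.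
    + intros u Hu. rewrite ind_cone_out. ring. rewrite (Rabs_left x) by lra.
      unfold Rabs; destruct Rcase_abs; lra.
    + intros u Hu. rewrite ind_cone_in, sgn_neg. ring. exact Hn.
      rewrite (Rabs_left x) by lra. unfold Rabs; destruct Rcase_abs; lra.
    + replace L with (-1 * (- L)) by ring. apply isRI_scal.
      apply (is_RInt_swap (V:=R_NormedModule)).
      apply (RInt_correct (V:=R_CompleteNormedModule)), ExK.
  - assert (x = 0) by lra. subst x.
    apply int_R_compact_eq with K s s. lra.
    + intros u Hu. rewrite ind_cone_out. ring. rewrite Rabs_R0. pose proof (Rabs_pos (u - s)); lra.
    + intros u Hu; lra.
    + unfold L. replace (s - 0) with s by ring. replace (s + 0) with s by ring.
      apply (RInt_correct (V:=R_CompleteNormedModule)), ExK.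
Qed.

Lemma RInt_extR : forall (g h : R -> R) a b, (forall t, g t = h t) -> RInt g a b = RInt h a b.
Proof. intros. apply RInt_ext. intros; apply H. Qed.

Lemma cont2_1d' : forall (h : R -> R) x y, continuous h y ->
  continuity_2d_pt (fun u v => h v) x y.
Proof.
  intros h x y H. apply (cont2_comp1 h (fun u v => v)). exact H.
  apply continuity_2d_pt_id2.
Qed.

Lemma cmult : forall (g h : R -> R) u, continuous g u -> continuous h u ->
  continuous (fun y => g y * h y) u.
Proof. intros. apply (continuous_mult (K:=R_AbsRing) g h u H H0). Qed.
Lemma cplus : forall (g h : R -> R) u, continuous g u -> continuous h u ->
  continuous (fun y => g y + h y) u.
Proof. intros. apply (continuous_plus (V:=R_NormedModule) g h u H H0). Qed.
Lemma cconst : forall (c u : R), continuous (fun _ : R => c) u.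
Proof. intros. apply continuous_const. Qed.
Lemma copp : forall (g : R -> R) u, continuous g u -> continuous (fun y => - g y) u.
Proof. intros. apply (continuous_opp (V:=R_NormedModule) g u H). Qed.

Lemma cont_fq : forall s x u, continuous (fun u => f ((u - s) ^ 2 - x ^ 2)) u.
Proof.
  intros. apply (continuous_comp (fun u => (u - s) ^ 2 - x ^ 2) f).
  apply (ex_derive_continuous (K:=R_AbsRing) (V:=R_NormedModule)). auto_derive. auto.
  apply f_cont.
Qed.
Lemma cont_f'q : forall s x u, continuous (fun u => f' ((u - s) ^ 2 - x ^ 2)) u.
Proof.
  intros. apply (continuous_comp (fun u => (u - s) ^ 2 - x ^ 2) f').
  apply (ex_derive_continuous (K:=R_AbsRing) (V:=R_NormedModule)). auto_derive. auto.
  apply f'_cont.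
Qed.

Lemma q_yv : forall s x t, (s + x * t - s) ^ 2 - x ^ 2 = yv x t.
Proof. intros. unfold yv. ring. Qed.

Lemma pair_sharp_eq : forall s x psi, (forall u, continuous psi u) ->
  pair_sharp s x psi = Ps s x psi.
Proof.
  intros s x psi Hpsi. unfold pair_sharp.
  rewrite (int_R_ext (fun u => chi_sharp s x u * psi u) (fun u => sgn x * (/ 2 * exp (x / 2) * f ((u - s) ^ 2 - x ^ 2) * psi u)
     * ind_cone x (u - s))) by (intro; unfold chi_sharp; ring).
  rewrite GEN.
  - unfold Ps. f_equal. apply RInt_extR. intros t. rewrite q_yv. unfold W, cc. ring.
  - intro u. apply cmult. apply cmult. apply cconst. apply cont_fq. apply Hpsi.
Qed.

Lemma pair_flat_eq : forall s x psi, (forall u, continuous psi u) ->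
  pair_flat s x psi = P1s s x psi - Ps s x psi.
Proof.
  intros s x psi Hpsi. unfold pair_flat.
  rewrite (int_R_ext (fun u => chi_flat_ac s x u * psi u) (fun u => sgn x * (- (/ 2 * exp (x / 2) * (/ 2 * f ((u - s) ^ 2 - x ^ 2)
     + 2 * x * f' ((u - s) ^ 2 - x ^ 2))) * psi u) * ind_cone x (u - s)))
    by (intro; unfold chi_flat_ac; ring).
  rewrite GEN.
  - unfold P1s, Ps. fold (cc x).
    assert (E1 : ex_RInt (fun t => U x t * psi (s + x * t)) (-1) 1).
    { apply (exRI2 (fun x t => U x t * psi (s + x * t))). intros. c2x.
      apply (cont2_comp2 (fun _ w => psi w) (fun u v => u) (fun u v => s + u * v)).
      apply cont2_1d'. apply Hpsi. c2x. c2x. }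
    assert (E2 : ex_RInt (fun t => W x t * psi (s + x * t)) (-1) 1).
    { apply (exRI2 (fun x t => W x t * psi (s + x * t))). intros. c2x.
      apply (cont2_comp2 (fun _ w => psi w) (fun u v => u) (fun u v => s + u * v)).
      apply cont2_1d'. apply Hpsi. c2x. c2x. }
    rewrite (RInt_extR _ (fun t => U x t * psi (s + x * t) - W x t * psi (s + x * t))).
    + assert (EM := RInt_minus (V:=R_CompleteNormedModule) _ _ _ _ E1 E2).
      simpl in EM. unfold minus, plus, opp in EM; simpl in EM.
      change (fun x0 : R => U x x0 * psi (s + x * x0) - W x x0 * psi (s + x * x0)) with
        (fun x0 : R => U x x0 * psi (s + x * x0) + - (W x x0 * psi (s + x * x0))).
      rewrite EM. ring.
    + intros t. rewrite q_yv. unfold U, W, cc. field.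
  - intro u. apply cmult. apply copp. apply cmult. apply cconst.
    apply cplus. apply cmult. apply cconst. apply cont_fq.
    apply cmult. apply cconst. apply cont_f'q. apply Hpsi.
Qed.

Lemma pseries_lim : forall a y, ex_pseries a y ->
  is_lim_seq (fun N => sum_f_R0 (fun k => a k * y ^ k) N) (PSeries a y).
Proof.
  intros a y H. apply PSeries_correct in H.
  apply is_lim_seq_ext with (sum_n (fun k => scal (pow_n y k) (a k))).
  - intro N. rewrite sum_n_Reals. apply sum_eq. intros. rewrite pow_n_pow.
    unfold scal; simpl; unfold mult; simpl. ring.
  - exact H.
Qed.

Lemma lim_abs_bound : forall u (l B : R), is_lim_seq u l -> (forall N, Rabs (u N) <= B) -> Rabs l <= B.
Proof.
  intros u l B Hu HB.
  assert (H := is_lim_seq_le (fun N => Rabs (u N)) (fun _ => B) (Rabs l) B HB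
    (is_lim_seq_abs u l Hu) (is_lim_seq_const B)).
  exact H.
Qed.

Lemma sum_abs_le : forall (g h : nat -> R) N, (forall k, Rabs (g k) <= h k) ->
  Rabs (sum_f_R0 g N) <= sum_f_R0 h N.
Proof.
  intros g h N H. induction N; simpl. apply H.
  eapply Rle_trans. apply Rabs_triang. specialize (H (S N)). lra.
Qed.

Lemma sum_le : forall (g h : nat -> R) N, (forall k, g k <= h k) ->
  sum_f_R0 g N <= sum_f_R0 h N.
Proof. intros g h N H. induction N; simpl. apply H. specialize (H (S N)). lra. Qed.

Lemma sum_nonneg : forall (g : nat -> R) N, (forall k, 0 <= g k) -> 0 <= sum_f_R0 g N.
Proof. intros g N H. induction N; simpl. apply H. specialize (H (S N)). lra. Qed.

Lemma exp_partial : forall X N, 0 <= X -> sum_f_R0 (fun k => X ^ k / INR (fact k)) N <= exp X.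
Proof.
  intros X N HX.
  assert (L : is_lim_seq (fun N => sum_f_R0 (fun k => X ^ k / INR (fact k)) N) (exp X)).
  { apply is_lim_seq_ext with (fun N => sum_f_R0 (fun k => / INR (fact k) * X ^ k) N).
    intro; apply sum_eq; intros; unfold Rdiv; ring.
    assert (E := is_exp_Reals X).
    rewrite <- (is_pseries_unique _ _ _ E).
    apply pseries_lim. eexists; exact E. }
  apply (is_lim_seq_incr_compare _ _ L). intro n. rewrite tech5.
  assert (0 <= X ^ S n / INR (fact (S n))).
  { apply Rmult_le_pos. apply pow_le, HX. apply Rlt_le, Rinv_0_lt_compat, lt_0_INR, lt_O_fact. }
  lra.
Qed.

Lemma term_le_exp : forall X n, 0 <= X -> X ^ n / INR (fact n) <= exp X.
Proof.
  intros X n HX. eapply Rle_trans; [| apply (exp_partial X n HX)].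
  destruct n. simpl. lra.
  rewrite tech5. assert (0 <= sum_f_R0 (fun k => X ^ k / INR (fact k)) n).
  { apply sum_nonneg. intro k. apply Rmult_le_pos. apply pow_le, HX.
    apply Rlt_le, Rinv_0_lt_compat, lt_0_INR, lt_O_fact. }
  lra.
Qed.

Lemma term_le_exp2 : forall X n, 0 < X -> X ^ n / INR (fact n) <= (INR n + 1) / X * exp X.
Proof.
  intros X n HX.
  assert (H := term_le_exp X (S n) (Rlt_le _ _ HX)).
  replace (X ^ n / INR (fact n)) with ((INR n + 1) / X * (X ^ S n / INR (fact (S n)))).
  apply Rmult_le_compat_l. apply Rmult_le_pos. pose proof (pos_INR n); lra.
  apply Rlt_le, Rinv_0_lt_compat, HX. exact H.
  rewrite fact_simpl, mult_INR, S_INR. simpl.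
  assert (INR (fact n) <> 0) by (apply not_0_INR, fact_neq_0).
  pose proof (pos_INR n). field. repeat split; lra.
Qed.

Lemma sub_sum : forall (g : nat -> R) e N, (forall k, 0 <= g k) ->
  sum_f_R0 (fun k => g (2 * k + e)%nat) N <= sum_f_R0 g (2 * N + e).
Proof.
  intros g e N Hg. induction N.
  - simpl. replace (e) with (e) by reflexivity.
    destruct e. simpl. lra. rewrite (tech5 g e). simpl.
    assert (0 <= sum_f_R0 g e) by (apply sum_nonneg, Hg). lra.
  - rewrite (tech5 (fun k => g (2 * k + e)%nat) N).
    replace (2 * S N + e)%nat with (S (S (2 * N + e))) by lia.
    rewrite (tech5 g (S (2 * N + e))), (tech5 g (2 * N + e)).
    specialize (Hg (S (2 * N + e))). lra.
Qed.

Lemma even_odd_exp : forall X e N, 0 <= X ->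
  sum_f_R0 (fun k => X ^ (2 * k + e) / INR (fact (2 * k + e))) N <= exp X.
Proof.
  intros X e N HX. eapply Rle_trans.
  apply (sub_sum (fun n => X ^ n / INR (fact n))).
  intro k. apply Rmult_le_pos. apply pow_le, HX.
  apply Rlt_le, Rinv_0_lt_compat, lt_0_INR, lt_O_fact.
  apply exp_partial, HX.
Qed.

Definition bk (k : nat) : R := INR (fact (2 * k)) / (4 ^ k * INR (fact k) ^ 2).

Lemma fact_nz : forall n, INR (fact n) <> 0.
Proof. intro; apply not_0_INR, fact_neq_0. Qed.
Lemma fact_pos : forall n, 0 < INR (fact n).
Proof. intro; apply lt_0_INR, lt_O_fact. Qed.

Lemma bk_S : forall k, bk (S k) = bk k * (2 * INR k + 1) / (2 * INR k + 2).
Proof.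
  intro k. unfold bk. replace (2 * S k)%nat with (S (S (2 * k))) by lia.
  rewrite !fact_simpl, !mult_INR, !S_INR, mult_INR.
  pose proof (fact_nz k). pose proof (fact_nz (2 * k)). pose proof (pos_INR k).
  simpl pow. replace (INR 2) with 2 by (simpl; ring).
  field. repeat split; try lra. apply pow_nonzero; lra.
Qed.

Lemma bk_0 : bk 0 = 1.
Proof. unfold bk. simpl. field. Qed.

Lemma bk_pos : forall k, 0 < bk k.
Proof.
  intro k. unfold bk. apply Rdiv_lt_0_compat. apply fact_pos.
  apply Rmult_lt_0_compat. apply pow_lt; lra. apply pow_lt, fact_pos.
Qed.

Lemma bk_le_S : forall k, bk (S k) <= bk k.
Proof.
  intro k. rewrite bk_S. pose proof (bk_pos k). pose proof (pos_INR k).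
  apply Rmult_le_reg_r with (2 * INR k + 2). lra.
  unfold Rdiv. rewrite Rmult_assoc, Rinv_l by lra. nra.
Qed.

Lemma bk_decr : forall k m, (k <= m)%nat -> bk m <= bk k.
Proof.
  intros k m H. induction H. lra. eapply Rle_trans. apply bk_le_S. exact IHle.
Qed.

Lemma bk_le1 : forall k, bk k <= 1.
Proof. intro k. rewrite <- bk_0. apply bk_decr. lia. Qed.

Lemma bk_sq : forall k, bk k ^ 2 <= / (2 * INR k + 1).
Proof.
  induction k.
  - rewrite bk_0. simpl. lra.
  - rewrite bk_S, S_INR. pose proof (pos_INR k). pose proof (bk_pos k).
    set (n := INR k) in *. set (b := bk k) in *.
    replace ((b * (2 * n + 1) / (2 * n + 2)) ^ 2) with (b ^ 2 * ((2 * n + 1) ^ 2 / (2 * n + 2) ^ 2))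
      by (field; lra).
    apply Rle_trans with (/ (2 * n + 1) * ((2 * n + 1) ^ 2 / (2 * n + 2) ^ 2)).
    apply Rmult_le_compat_r. apply Rmult_le_pos. nra. apply Rlt_le, Rinv_0_lt_compat. nra.
    exact IHk.
    replace (/ (2 * n + 1) * ((2 * n + 1) ^ 2 / (2 * n + 2) ^ 2)) with ((2 * n + 1) / (2 * n + 2) ^ 2)
      by (field; lra).
    apply Rmult_le_reg_r with ((2 * n + 2) ^ 2 * (2 * (n + 1) + 1)). nra.
    unfold Rdiv. field_simplify; try lra.
Qed.

Lemma bk_small : forall eps, 0 < eps -> exists K, bk K <= eps.
Proof.
  intros eps He.
  destruct (INR_archimed (eps ^ 2) 1) as [K HK]. nra.
  exists K. pose proof (bk_sq K). pose proof (bk_pos K). pose proof (pos_INR K).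
  assert (bk K ^ 2 <= eps ^ 2).
  { eapply Rle_trans. exact H.
    apply Rmult_le_reg_r with (2 * INR K + 1). lra.
    rewrite Rinv_l by lra. nra. }
  nra.
Qed.

Lemma SUMB : forall (c : nat -> R) X e K beta N, 0 < X -> (e <= 1)%nat ->
  (forall k, 0 <= c k <= 1) -> (forall k, (K <= k)%nat -> c k <= beta) -> 0 <= beta ->
  sum_f_R0 (fun k => c k * (X ^ (2 * k + e) / INR (fact (2 * k + e)))) N
    <= exp X * (INR K * (2 * INR K + 2) / X + beta).
Proof.
  intros c X e K beta N HX He Hc HK Hb.
  set (T := fun k => X ^ (2 * k + e) / INR (fact (2 * k + e))).
  assert (HT0 : forall k, 0 <= T k).
  { intro k. unfold T. apply Rmult_le_pos. apply pow_le; lra.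
    apply Rlt_le, Rinv_0_lt_compat, fact_pos. }
  set (A := (2 * INR K + 2) / X * exp X).
  assert (HA : 0 <= A).
  { unfold A. apply Rmult_le_pos. apply Rmult_le_pos. pose proof (pos_INR K); lra.
    apply Rlt_le, Rinv_0_lt_compat, HX. apply Rlt_le, exp_pos. }
  assert (HTk : forall k, (k < K)%nat -> T k <= A).
  { intros k Hk. unfold T, A. eapply Rle_trans. apply term_le_exp2, HX.
    apply Rmult_le_compat_r. apply Rlt_le, exp_pos.
    unfold Rdiv. apply Rmult_le_compat_r. apply Rlt_le, Rinv_0_lt_compat, HX.
    rewrite plus_INR, mult_INR. simpl INR. apply le_INR in He. apply lt_INR in Hk.
    simpl in He. lra. }
  assert (Main : sum_f_R0 (fun k => c k * T k) N <= INR (Nat.min (S N) K) * A + beta * sum_f_R0 T N).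
  { induction N.
    - simpl sum_f_R0. destruct K as [|K'].
      + simpl. specialize (HK 0%nat (Nat.le_refl 0)). specialize (HT0 0%nat).
        replace (INR 0) with 0 by reflexivity. nra.
      + replace (Nat.min 1 (S K')) with 1%nat by (simpl; lia). simpl INR.
        specialize (HTk 0%nat ltac:(lia)). specialize (Hc 0%nat). specialize (HT0 0%nat). nra.
    - rewrite !tech5. specialize (HT0 (S N)). specialize (Hc (S N)).
      destruct (Nat.lt_ge_cases (S N) K) as [Hl | Hg].
      + replace (Nat.min (S (S N)) K) with (S (Nat.min (S N) K)) by lia.
        rewrite S_INR. specialize (HTk (S N) Hl). nra.
      + replace (Nat.min (S (S N)) K) with (Nat.min (S N) K) by lia.
        specialize (HK (S N) Hg). nra. }
  eapply Rle_trans. exact Main.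
  assert (INR (Nat.min (S N) K) <= INR K) by (apply le_INR; lia).
  assert (sum_f_R0 T N <= exp X) by (apply even_odd_exp; lra).
  unfold A. rewrite Rmult_plus_distr_l.
  replace (exp X * (INR K * (2 * INR K + 2) / X)) with (INR K * ((2 * INR K + 2) / X * exp X))
    by (field; lra).
  apply Rplus_le_compat. apply Rmult_le_compat_r. fold A; exact HA. exact H.
  rewrite (Rmult_comm (exp X)). apply Rmult_le_compat_l; assumption.
Qed.

Lemma abs_f_coef : forall k, Rabs (f_coef k) = / 16 ^ k / INR (fact k) ^ 2.
Proof.
  intro k. unfold f_coef. unfold Rdiv. rewrite Rabs_mult, <- RPow_abs, Rabs_Ropp.
  rewrite Rabs_right by lra. rewrite Rabs_right.
  rewrite pow_inv. reflexivity.
  apply Rle_ge, Rlt_le, Rinv_0_lt_compat, pow_lt, fact_pos.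
Qed.

Lemma f_term_id : forall X k, Rabs (f_coef k) * (4 * X ^ 2) ^ k
  = bk k * (X ^ (2 * k + 0) / INR (fact (2 * k + 0))).
Proof.
  intros X k. rewrite abs_f_coef. unfold bk. rewrite Nat.add_0_r.
  rewrite pow_mult, Rpow_mult_distr.
  replace (16 ^ k) with (4 ^ k * 4 ^ k) by (rewrite <- Rpow_mult_distr; f_equal; ring).
  pose proof (fact_nz k). pose proof (fact_nz (2 * k)).
  assert (4 ^ k <> 0) by (apply pow_nonzero; lra).
  field. auto.
Qed.

Lemma f'_term_id : forall X k, 0 <= X -> 2 * X * Rabs (fc1 k) * (4 * X ^ 2) ^ k
  = bk (S k) / 4 * (X ^ (2 * k + 1) / INR (fact (2 * k + 1))).
Proof.
  intros X k HX. unfold fc1, PS_derive. rewrite Rabs_mult, abs_f_coef.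
  rewrite Rabs_right by (apply Rle_ge, pos_INR).
  unfold bk. replace (2 * S k)%nat with (S (2 * k + 1)) by lia.
  rewrite (fact_simpl (2 * k + 1)), mult_INR.
  replace (X ^ (2 * k + 1)) with (X * (X ^ 2) ^ k) by (rewrite pow_add, pow_mult; simpl; ring).
  rewrite Rpow_mult_distr.
  replace (16 ^ S k) with (4 ^ S k * 4 ^ S k) by (rewrite <- Rpow_mult_distr; f_equal; ring).
  rewrite (fact_simpl k), mult_INR.
  pose proof (fact_nz k). pose proof (fact_nz (2 * k + 1)). pose proof (pos_INR k).
  assert (4 ^ k <> 0) by (apply pow_nonzero; lra).
  rewrite !S_INR, plus_INR, mult_INR. simpl pow. replace (INR 2) with 2 by (simpl; ring).
  replace (INR 1) with 1 by reflexivity.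
  field. repeat split; try lra.
Qed.

Lemma f_bnd : forall x y K, x < 0 -> Rabs y <= x ^ 2 ->
  Rabs (f y) <= exp (- x / 2) * (INR K * (2 * INR K + 2) / (- x / 2) + bk K).
Proof.
  intros x y K Hx Hy. set (X := - x / 2).
  assert (HX : 0 < X) by (unfold X; lra).
  apply (lim_abs_bound (fun N => sum_f_R0 (fun k => f_coef k * y ^ k) N)).
  apply pseries_lim. apply CV_radius_inside, rad_lt, f_rad.
  intro N. eapply Rle_trans. apply sum_abs_le with (h := fun k => Rabs (f_coef k) * (x ^ 2) ^ k).
  { intro k. rewrite Rabs_mult, <- RPow_abs. apply Rmult_le_compat_l. apply Rabs_pos.
    apply pow_incr. split. apply Rabs_pos. exact Hy. }
  rewrite (sum_eq _ (fun k => bk k * (X ^ (2 * k + 0) / INR (fact (2 * k + 0))))).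
  - apply SUMB. exact HX. lia. intro k. split. apply Rlt_le, bk_pos. apply bk_le1.
    intros k Hk. apply bk_decr, Hk. apply Rlt_le, bk_pos.
  - intros k _. rewrite <- f_term_id. f_equal. f_equal. unfold X. field.
Qed.

Lemma f'_bnd : forall x y K, x < 0 -> Rabs y <= x ^ 2 ->
  Rabs x * Rabs (f' y) <= exp (- x / 2) * (INR K * (2 * INR K + 2) / (- x / 2) + bk K).
Proof.
  intros x y K Hx Hy. set (X := - x / 2).
  assert (HX : 0 < X) by (unfold X; lra).
  rewrite <- Rabs_mult, f'_eq.
  apply (lim_abs_bound (fun N => x * sum_f_R0 (fun k => fc1 k * y ^ k) N)).
  apply (is_lim_seq_scal_l _ x (PSeries fc1 y)).
  apply pseries_lim. apply CV_radius_inside, rad_lt, fc1_rad.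
  intro N. rewrite scal_sum. eapply Rle_trans.
  apply sum_abs_le with (h := fun k => 2 * X * Rabs (fc1 k) * (4 * X ^ 2) ^ k).
  { intro k. rewrite !Rabs_mult, <- RPow_abs.
    replace (Rabs x) with (2 * X) by (unfold X; rewrite Rabs_left by lra; field).
    replace (2 * X * Rabs (fc1 k) * (4 * X ^ 2) ^ k) with (2 * X * (Rabs (fc1 k) * (4 * X ^ 2) ^ k))
      by ring.
    rewrite (Rmult_comm (Rabs (fc1 k) * Rabs y ^ k)). apply Rmult_le_compat_l. lra.
    apply Rmult_le_compat_l. apply Rabs_pos.
    apply pow_incr. split. apply Rabs_pos. replace (4 * X ^ 2) with (x ^ 2) by (unfold X; field).
    exact Hy. }
  rewrite (sum_eq _ (fun k => bk (S k) / 4 * (X ^ (2 * k + 1) / INR (fact (2 * k + 1))))).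
  - apply SUMB. exact HX. lia. intro k. pose proof (bk_pos (S k)). pose proof (bk_le1 (S k)).
    split; lra.
    intros k Hk. pose proof (bk_decr K (S k) ltac:(lia)). pose proof (bk_pos (S k)). lra.
    apply Rlt_le, bk_pos.
  - intros k _. apply f'_term_id. lra.
Qed.

Lemma FDEC : forall eps, 0 < eps -> exists A, A < 0 /\ forall x y, x < A -> Rabs y <= x ^ 2 ->
  exp (x / 2) * Rabs (f y) <= eps /\ exp (x / 2) * (Rabs x * Rabs (f' y)) <= eps.
Proof.
  intros eps He. destruct (bk_small (eps / 2)) as [K HK]. lra.
  set (C := INR K * (2 * INR K + 2)).
  assert (HC : 0 <= C) by (unfold C; pose proof (pos_INR K); nra).
  exists (- (4 * C / eps) - 1). split.
  { assert (0 <= 4 * C / eps) by (apply Rmult_le_pos; [lra| apply Rlt_le, Rinv_0_lt_compat, He]). lra. }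
  intros x y Hx Hy.
  assert (Hx0 : x < 0).
  { assert (0 <= 4 * C / eps) by (apply Rmult_le_pos; [lra| apply Rlt_le, Rinv_0_lt_compat, He]). lra. }
  assert (Hb : C / (- x / 2) <= eps / 2).
  { apply Rmult_le_reg_r with (- x / 2). lra. unfold Rdiv at 1. rewrite Rmult_assoc, Rinv_l by lra.
    assert (4 * C / eps < - x) by lra.
    apply Rmult_lt_compat_r with (r := eps) in H. 2: lra.
    unfold Rdiv in H. rewrite Rmult_assoc, Rinv_l in H by lra. nra. }
  assert (Ee : exp (x / 2) * exp (- x / 2) = 1).
  { rewrite <- exp_plus. replace (x / 2 + - x / 2) with 0 by field. apply exp_0. }
  assert (Hp : 0 < exp (x / 2)) by apply exp_pos.
  split.
  - eapply Rle_trans. apply Rmult_le_compat_l. lra. apply (f_bnd x y K Hx0 Hy).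
    rewrite <- Rmult_assoc, Ee. fold C. lra.
  - eapply Rle_trans. apply Rmult_le_compat_l. lra. apply (f'_bnd x y K Hx0 Hy).
    rewrite <- Rmult_assoc, Ee. fold C. lra.
Qed.

Lemma RInt_zero : forall (g : R -> R) a b, (forall t, g t = 0) -> RInt g a b = 0.
Proof.
  intros g a b H. rewrite (RInt_extR g (fun _ => 0)) by exact H.
  rewrite (RInt_const (V:=R_CompleteNormedModule)). unfold scal; simpl; unfold mult; simpl. ring.
Qed.

Lemma RInt_zero_open : forall (g : R -> R) a b, a <= b -> (forall t, a < t < b -> g t = 0) ->
  RInt g a b = 0.
Proof.
  intros g a b Hab H. rewrite (RInt_ext g (fun _ => 0)).
  rewrite (RInt_const (V:=R_CompleteNormedModule)). unfold scal; simpl; unfold mult; simpl. ring.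
  intros t Ht. rewrite Rmin_left, Rmax_right in Ht by lra. apply H, Ht.
Qed.

Lemma Ps_ext : forall s x (p q : R -> R), (forall u, p u = q u) -> Ps s x p = Ps s x q.
Proof. intros. unfold Ps. f_equal. apply RInt_extR. intro t. rewrite H. reflexivity. Qed.
Lemma P1s_ext : forall s x (p q : R -> R), (forall u, p u = q u) -> P1s s x p = P1s s x q.
Proof.
  intros. unfold P1s. rewrite !H. f_equal. f_equal. apply RInt_extR. intro t. rewrite H. reflexivity.
Qed.
Lemma Ps_zero : forall s x, Ps s x (fun _ => 0) = 0.
Proof. intros. unfold Ps. rewrite RInt_zero. ring. intro; ring. Qed.
Lemma P1s_zero : forall s x, P1s s x (fun _ => 0) = 0.
Proof. intros. unfold P1s. rewrite RInt_zero. ring. intro; ring. Qed.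

Lemma C1_1d : forall h : R -> R, (forall u, ex_derive h u) -> (forall u, ex_derive (Derive h) u) ->
  C1 (fun _ u => h u).
Proof.
  intros h H1 H2 x y. repeat split.
  - apply ex_derive_const.
  - apply H1.
  - apply cont2_1d'. apply (ex_derive_continuous (K:=R_AbsRing) (V:=R_NormedModule)), H1.
  - apply continuity_2d_pt_ext with (fun _ _ => 0).
    intros; unfold dR; rewrite Derive_const; reflexivity. apply continuity_2d_pt_const.
  - change (continuity_2d_pt (fun _ u => Derive h u) x y).
    apply cont2_1d'. apply (ex_derive_continuous (K:=R_AbsRing) (V:=R_NormedModule)), H2.
Qed.

Lemma psi_bound : forall psi M, (forall u, continuous psi u) -> (forall u, M < Rabs u -> psi u = 0) ->
  exists B, 0 <= B /\ forall u, Rabs (psi u) <= B.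
Proof.
  intros psi M Hc Hs.
  destruct (continuous_ab_maj_consistent (fun u => Rabs (psi u)) (- Rabs M) (Rabs M)) as [m [Hm _]].
  pose proof (Rabs_pos M); lra.
  intros c _. apply continuous_Rabs_comp, Hc.
  exists (Rabs (psi m)). split. apply Rabs_pos.
  intro u. destruct (Rle_dec (Rabs u) (Rabs M)).
  - apply Hm. unfold Rabs in *. repeat destruct Rcase_abs; lra.
  - rewrite Hs. rewrite Rabs_R0. apply Rabs_pos. unfold Rabs in *; repeat destruct Rcase_abs; lra.
Qed.

Lemma DEC : forall s x (k psi : R -> R) M B Km, 0 <= M -> (forall u, continuous psi u) ->
  (forall u, continuous k u) ->
  (forall u, Rabs (psi u) <= B) -> (forall u, M < Rabs u -> psi u = 0) ->
  (forall t, -1 <= t <= 1 -> Rabs (k t) <= Km) -> M + Rabs s < Rabs x ->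
  Rabs (x * RInt (fun t => k t * psi (s + x * t)) (-1) 1) <= 2 * (M + Rabs s) * (Km * B).
Proof.
  intros s x k psi M B Km HM Hpc Hkc HB Hs Hk Hx.
  assert (Hx0 : 0 < Rabs x) by (pose proof (Rabs_pos s); lra).
  set (d := (M + Rabs s) / Rabs x).
  assert (Hd0 : 0 <= d) by (unfold d; apply Rmult_le_pos; [pose proof (Rabs_pos s); lra| apply Rlt_le, Rinv_0_lt_compat; lra]).
  assert (Hd1 : d < 1).
  { unfold d. apply Rmult_lt_reg_r with (Rabs x). lra. unfold Rdiv. rewrite Rmult_assoc, Rinv_l by lra. lra. }
  set (g := fun t => k t * psi (s + x * t)).
  assert (Eg : forall a b, ex_RInt g a b).
  { intros. apply (ex_RInt_continuous (V:=R_CompleteNormedModule)). intros z _. unfold g.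
    apply cmult. apply Hkc. apply (continuous_comp (fun t => s + x * t) psi).
    apply (ex_derive_continuous (K:=R_AbsRing) (V:=R_NormedModule)). auto_derive. auto. apply Hpc. }
  assert (Hz : forall t, d < Rabs t -> g t = 0).
  { intros t Ht. unfold g. rewrite (Hs (s + x * t)). ring.
    assert (M + Rabs s < Rabs x * Rabs t).
    { unfold d in Ht. apply Rmult_lt_compat_l with (r := Rabs x) in Ht. 2: lra.
      unfold Rdiv in Ht. rewrite <- Rmult_assoc, (Rmult_comm (Rabs x)), Rmult_assoc, Rinv_r, Rmult_1_r in Ht by lra.
      lra. }
    rewrite <- Rabs_mult in H.
    pose proof (Rabs_triang_inv (x * t) (- s)). rewrite Rabs_Ropp in H0.
    replace (x * t - - s) with (s + x * t) in H0 by ring. lra. }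
  fold g.
  rewrite <- (RInt_Chasles (V:=R_CompleteNormedModule) g (-1) (-d) 1) by apply Eg.
  rewrite <- (RInt_Chasles (V:=R_CompleteNormedModule) g (-d) d 1) by apply Eg.
  rewrite (RInt_zero_open g (-1) (-d)). 2: lra.
  2: { intros t Ht. apply Hz. rewrite Rabs_left by lra. lra. }
  rewrite (RInt_zero_open g d 1). 2: lra.
  2: { intros t Ht. apply Hz. rewrite Rabs_right by lra. lra. }
  unfold plus; simpl. rewrite Rplus_0_l, Rplus_0_r.
  rewrite Rabs_mult.
  assert (HB0 : 0 <= B) by (specialize (HB 0); pose proof (Rabs_pos (psi 0)); lra).
  assert (Hi : Rabs (RInt g (-d) d) <= (d - - d) * (Km * B)).
  { apply abs_RInt_le_const. lra. apply Eg.
    intros t Ht. unfold g. rewrite Rabs_mult. apply Rmult_le_compat. apply Rabs_pos. apply Rabs_pos.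
    apply Hk; lra. apply HB. }
  apply Rle_trans with (Rabs x * ((d - - d) * (Km * B))).
  apply Rmult_le_compat_l. apply Rabs_pos. exact Hi.
  replace (Rabs x * ((d - - d) * (Km * B))) with (2 * (Rabs x * d) * (Km * B)) by ring.
  replace (Rabs x * d) with (M + Rabs s) by (unfold d; field; lra).
  lra.
Qed.

Lemma cc_0 : cc 0 = / 2.
Proof. unfold cc. replace (0 / 2) with 0 by field. rewrite exp_0. ring. Qed.

Lemma lim_at : forall (g : R -> R) x l, (forall y, ex_derive g y) -> g x = l -> is_lim g x l.
Proof.
  intros g x l Hd E. rewrite <- E. apply is_lim_continuity. apply cont_R_of_ex_derive, Hd.
Qed.

Lemma yv_bound : forall x t, -1 <= t <= 1 -> Rabs (yv x t) <= x ^ 2.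
Proof.
  intros x t Ht. unfold yv. rewrite Rabs_mult, (Rabs_right (x ^ 2)) by (apply Rle_ge; nra).
  rewrite Rabs_left1 by nra. assert (0 <= x ^ 2) by nra. nra.
Qed.

Lemma kern_bound : forall eps A, (forall x y, x < A -> Rabs y <= x ^ 2 ->
  exp (x / 2) * Rabs (f y) <= eps /\ exp (x / 2) * (Rabs x * Rabs (f' y)) <= eps) ->
  forall x t, x < A -> -1 <= t <= 1 ->
  Rabs (W x t) <= / 2 * eps /\ Rabs (U x t) <= / 2 * (/ 2 * eps + 2 * eps).
Proof.
  intros eps A H x t Hx Ht. destruct (H x (yv x t) Hx (yv_bound x t Ht)) as [H1 H2].
  pose proof (exp_pos (x / 2)).
  unfold W, U, cc. split.
  - rewrite !Rabs_mult, (Rabs_right (/2)) by lra. rewrite (Rabs_right (exp _)) by lra. lra.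
  - rewrite Rabs_mult, Rabs_mult, (Rabs_right (/2)) by lra. rewrite (Rabs_right (exp _)) by lra.
    assert (Rabs (/ 2 * f (yv x t) - 2 * x * f' (yv x t)) <= / 2 * Rabs (f (yv x t)) + 2 * (Rabs x * Rabs (f' (yv x t)))).
    { eapply Rle_trans. apply Rabs_triang. rewrite Rabs_Ropp, !Rabs_mult.
      rewrite (Rabs_right (/2)) by lra. rewrite (Rabs_right 2) by lra. lra. }
    assert (exp (x / 2) * Rabs (/ 2 * f (yv x t) - 2 * x * f' (yv x t)) <= / 2 * eps + 2 * eps) by nra.
    lra.
Qed.

Lemma part3 : forall s psi, test1 psi ->
     (forall R0, ex_derive (fun r => pair_sharp s r psi) R0) /\
     (forall R0, ex_derive (fun r => pair_flat s r psi) R0) /\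
     is_lim (fun R0 => pair_sharp s R0 psi) 0 0 /\
     is_lim (fun R0 => Derive (fun r => pair_sharp s r psi) R0) 0 (psi s) /\
     is_lim (fun R0 => pair_flat s R0 psi) 0 (psi s) /\
     is_lim (fun R0 => Derive (fun r => pair_flat s r psi) R0) 0 0 /\
     is_lim (fun R0 => pair_sharp s R0 psi) m_infty 0 /\
     is_lim (fun R0 => pair_flat s R0 psi) m_infty 0 /\
     (forall R0, pair_flat s R0 psi
                 = Derive (fun r => pair_sharp s r psi) R0 - pair_sharp s R0 psi).
Proof.
  intros s psi [Hd [M HM]].
  assert (D0 : forall u, ex_derive psi u) by exact (Hd 0%nat).
  assert (D1 : forall u, ex_derive (Derive psi) u) by exact (Hd 1%nat).
  assert (D2 : forall u, ex_derive (Derive (Derive psi)) u) by exact (Hd 2%nat).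
  assert (D3 : forall u, ex_derive (Derive (Derive (Derive psi))) u) by exact (Hd 3%nat).
  assert (Cpsi : forall u, continuous psi u).
  { intro u. apply (ex_derive_continuous (K:=R_AbsRing) (V:=R_NormedModule)), D0. }
  set (G0 := fun _ u : R => psi u).
  assert (HG0 : C1 G0) by (apply C1_1d; assumption).
  assert (HG1 : C1 (du G0)) by (apply (C1_1d (Derive psi)); assumption).
  set (G2 := fun _ u : R => Derive (Derive psi) u).
  assert (HG2 : C1 G2) by (apply (C1_1d (Derive (Derive psi))); assumption).
  assert (EdR : forall x u, dR G0 x u = 0) by (intros; unfold dR, G0; apply Derive_const).
  assert (Esh : forall x, pair_sharp s x psi = Ps s x psi) by (intro; apply pair_sharp_eq, Cpsi).
  assert (Efl : forall x, pair_flat s x psi = P1s s x psi - Ps s x psi)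
    by (intro; apply pair_flat_eq, Cpsi).
  assert (DPs : forall x, is_derive (fun r => Ps s r psi) x (P1s s x psi)).
  { intro x. assert (H := DA s G0 x HG0). rewrite (Ps_ext s x (dR G0 x) (fun _ => 0)) in H by apply EdR.
    rewrite Ps_zero, Rplus_0_r in H. exact H. }
  assert (DP1s : forall x, is_derive (fun r => P1s s r psi) x (P1s s x psi + Ps s x (Derive (Derive psi)))).
  { intro x. assert (H := DB s G0 x HG0 HG1).
    rewrite (P1s_ext s x (dR G0 x) (fun _ => 0)) in H by apply EdR.
    rewrite P1s_zero, Rplus_0_r in H. exact H. }
  assert (DPs2 : forall x, is_derive (fun r => Ps s r (Derive (Derive psi))) x
                    (P1s s x (Derive (Derive psi)))).
  { intro x. assert (H := DA s G2 x HG2).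
    rewrite (Ps_ext s x (dR G2 x) (fun _ => 0)) in H by (intros; unfold dR, G2; apply Derive_const).
    rewrite Ps_zero, Rplus_0_r in H. exact H. }
  assert (Dsh : forall x, is_derive (fun r => pair_sharp s r psi) x (P1s s x psi)).
  { intro x. apply is_derive_ext with (fun r => Ps s r psi). intro; symmetry; apply Esh. apply DPs. }
  assert (Dfl : forall x, is_derive (fun r => pair_flat s r psi) x (Ps s x (Derive (Derive psi)))).
  { intro x. apply is_derive_ext with (fun r => P1s s r psi - Ps s r psi). intro; symmetry; apply Efl.
    replace (Ps s x (Derive (Derive psi))) with
      ((P1s s x psi + Ps s x (Derive (Derive psi))) - P1s s x psi) by ring.
    apply (isd_minus (fun r => P1s s r psi) (fun r => Ps s r psi)). apply DP1s. apply DPs. }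
  assert (Ps0 : forall p, Ps s 0 p = 0) by (intro; unfold Ps; ring).
  assert (P1s0 : P1s s 0 psi = psi s).
  { unfold P1s. rewrite cc_0. replace (s + 0) with s by ring. replace (s - 0) with s by ring. field. }
  repeat split.
  - intro x. eexists; apply Dsh.
  - intro x. eexists; apply Dfl.
  - apply lim_at. intro y; eexists; apply Dsh. rewrite Esh. apply Ps0.
  - apply is_lim_ext with (fun r => P1s s r psi).
    intro y. symmetry. apply is_derive_unique, Dsh.
    apply lim_at. intro y; eexists; apply DP1s. exact P1s0.
  - apply lim_at. intro y; eexists; apply Dfl. rewrite Efl, P1s0, Ps0. ring.
  - apply is_lim_ext with (fun r => Ps s r (Derive (Derive psi))).
    intro y. symmetry. apply is_derive_unique, Dfl.
    apply lim_at. intro y; eexists; apply DPs2. apply Ps0.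
  - apply is_lim_ext with (fun x => Ps s x psi). intro; symmetry; apply Esh.
    apply is_lim_spec. intro eps.
    destruct (psi_bound psi M Cpsi HM) as [B [HB0 HB]].
    set (M' := Rabs M).
    assert (HM' : forall u, M' < Rabs u -> psi u = 0).
    { intros u Hu. apply HM. unfold M' in Hu. unfold Rabs in Hu at 1. destruct Rcase_abs; lra. }
    assert (HM0 : 0 <= M') by apply Rabs_pos.
    pose proof (Rabs_pos s).
    set (e' := eps / (4 * (M' + Rabs s + 1) * (B + 1))).
    assert (He' : 0 < e').
    { unfold e'. apply Rdiv_lt_0_compat. apply cond_pos. apply Rmult_lt_0_compat; lra. }
    destruct (FDEC e' He') as [A [HA HFA]].
    exists (Rmin A (- (M' + Rabs s + 1))). intros x Hx.
    assert (HxA : x < A) by (eapply Rlt_le_trans; [exact Hx| apply Rmin_l]).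
    assert (Hx2 : x < - (M' + Rabs s + 1)) by (eapply Rlt_le_trans; [exact Hx| apply Rmin_r]).
    rewrite Rminus_0_r. unfold Ps.
    eapply Rle_lt_trans. apply (DEC s x (W x) psi M' B (/ 2 * e')); auto.
    intro u; apply (cont2_snd W x u), cont2_W.
    intros t Ht. apply (kern_bound e' A HFA x t HxA Ht).
    rewrite (Rabs_left x) by lra. lra.
    assert (E4 : e' * (4 * (M' + Rabs s + 1) * (B + 1)) = eps).
    { unfold e'. field. lra. }
    assert (0 < eps) by apply cond_pos.
    assert ((M' + Rabs s) * B <= (M' + Rabs s + 1) * (B + 1)) by nra.
    nra.
  - apply is_lim_ext with (fun x => P1s s x psi - Ps s x psi). intro; symmetry; apply Efl.
    apply is_lim_spec. intro eps.
    destruct (psi_bound psi M Cpsi HM) as [B [HB0 HB]].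
    set (M' := Rabs M).
    assert (HM' : forall u, M' < Rabs u -> psi u = 0).
    { intros u Hu. apply HM. unfold M' in Hu. unfold Rabs in Hu at 1. destruct Rcase_abs; lra. }
    assert (HM0 : 0 <= M') by apply Rabs_pos.
    pose proof (Rabs_pos s).
    set (e' := eps / (4 * (M' + Rabs s + 1) * (B + 1))).
    assert (He' : 0 < e').
    { unfold e'. apply Rdiv_lt_0_compat. apply cond_pos. apply Rmult_lt_0_compat; lra. }
    destruct (FDEC e' He') as [A [HA HFA]].
    exists (Rmin A (- (M' + Rabs s + 1))). intros x Hx.
    assert (HxA : x < A) by (eapply Rlt_le_trans; [exact Hx| apply Rmin_l]).
    assert (Hx2 : x < - (M' + Rabs s + 1)) by (eapply Rlt_le_trans; [exact Hx| apply Rmin_r]).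
    assert (Hxa : M' + Rabs s < Rabs x) by (rewrite (Rabs_left x) by lra; lra).
    rewrite Rminus_0_r. unfold P1s, Ps.
    assert (P1 : psi (s - x) = 0).
    { apply HM'. pose proof (Rabs_triang_inv x s). rewrite Rabs_minus_sym. lra. }
    assert (P2 : psi (s + x) = 0).
    { apply HM'. pose proof (Rabs_triang_inv x (- s)). rewrite Rabs_Ropp in H0.
      replace (s + x) with (x - - s) by ring. lra. }
    rewrite P1, P2.
    replace (cc x * (0 + 0) + x * RInt (fun t => U x t * psi (s + x * t)) (-1) 1 -
      x * RInt (fun t => W x t * psi (s + x * t)) (-1) 1)
      with (x * RInt (fun t => U x t * psi (s + x * t)) (-1) 1 +
      - (x * RInt (fun t => W x t * psi (s + x * t)) (-1) 1)) by ring.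
    eapply Rle_lt_trans. apply Rabs_triang. rewrite Rabs_Ropp.
    eapply Rle_lt_trans. apply Rplus_le_compat.
    apply (DEC s x (U x) psi M' B (/ 2 * (/ 2 * e' + 2 * e'))); auto.
    intro u; apply (cont2_snd U x u), cont2_U.
    intros t Ht. apply (kern_bound e' A HFA x t HxA Ht).
    apply (DEC s x (W x) psi M' B (/ 2 * e')); auto.
    intro u; apply (cont2_snd W x u), cont2_W.
    intros t Ht. apply (kern_bound e' A HFA x t HxA Ht).
    assert (E4 : e' * (4 * (M' + Rabs s + 1) * (B + 1)) = eps).
    { unfold e'. field. lra. }
    assert (0 < eps) by apply cond_pos.
    assert ((M' + Rabs s) * B <= (M' + Rabs s + 1) * (B + 1)) by nra.
    nra.
  - intro x. rewrite Efl, Esh.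
    replace (Derive (fun r : R => pair_sharp s r psi) x) with (P1s s x psi).
    ring. symmetry; apply is_derive_unique, Dsh.
Qed.

Lemma RInt_minusR : forall (g h : R -> R) a b, ex_RInt g a b -> ex_RInt h a b ->
  RInt (fun t => g t - h t) a b = RInt g a b - RInt h a b.
Proof.
  intros. exact (RInt_minus (V:=R_CompleteNormedModule) g h a b H H0).
Qed.
Lemma RInt_plusR : forall (g h : R -> R) a b, ex_RInt g a b -> ex_RInt h a b ->
  RInt (fun t => g t + h t) a b = RInt g a b + RInt h a b.
Proof.
  intros. exact (RInt_plus (V:=R_CompleteNormedModule) g h a b H H0).
Qed.

Lemma cont_param : forall (g : R -> R -> R) x0, (forall u v, continuity_2d_pt g u v) ->
  continuous (fun x => RInt (fun t => g x t) (-1) 1) x0.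
Proof.
  intros g x0 Hg. apply filterlim_locally. intro eps.
  assert (He : 0 < eps / 3) by (destruct eps; simpl; lra).
  destruct (uniform_continuity_2d_1d' g (-1) 1 x0 (fun x _ => Hg x0 x) (mkposreal _ He))
    as [d Hd].
  exists d. intros x Hx. change (Rabs (RInt (fun t => g x t) (-1) 1 - RInt (fun t => g x0 t) (-1) 1) < eps).
  assert (Hx' : Rabs (x - x0) < d) by exact Hx.
  rewrite <- RInt_minusR by (apply exRI2, Hg).
  eapply Rle_lt_trans. apply abs_RInt_le_const with (M := eps / 3). lra.
  apply (ex_RInt_minus (V:=R_CompleteNormedModule)); apply exRI2, Hg.
  intros t Ht. apply Rlt_le.
  assert (H := Hd t x0 t x Ht ltac:(destruct d; simpl; lra) Ht).
  apply H. unfold Rabs in Hx'; destruct Rcase_abs; lra.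
  rewrite Rminus_eq_0, Rabs_R0. apply cond_pos.
  lra.
Qed.

Lemma Ps_cont : forall s (G : R -> R -> R) x0, (forall u v, continuity_2d_pt G u v) ->
  continuous (fun x => Ps s x (G x)) x0.
Proof.
  intros s G x0 HG. unfold Ps. apply cmult. apply continuous_id.
  apply (cont_param (fun x t => W x t * G x (s + x * t))). intros. c2x.
Qed.

Lemma P1s_cont : forall s (G : R -> R -> R) x0, (forall u v, continuity_2d_pt G u v) ->
  continuous (fun x => P1s s x (G x)) x0.
Proof.
  intros s G x0 HG. unfold P1s. apply cplus. apply cmult.
  apply (ex_derive_continuous (K:=R_AbsRing) (V:=R_NormedModule)). eexists; apply cc_d.
  apply cplus.
  apply (continuous_ext (fun t => G t (s + t * 1))). intro t; f_equal; ring.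
  apply (cont2_fst (fun x y => G x (s + x * y)) x0 1). apply (line_cont s G HG).
  apply (continuous_ext (fun t => G t (s - t * 1))). intro t; f_equal; ring.
  apply (cont2_fst (fun x y => G x (s - x * y)) x0 1).
  apply (cont2_comp2 G (fun u v => u) (fun u v => s - u * v)). apply HG. c2x. c2x.
  apply cmult. apply continuous_id.
  apply (cont_param (fun x t => U x t * G x (s + x * t))). intros. c2x.
Qed.

Lemma test2_C1 : forall phi w, test2 phi -> C1 (Dw w phi).
Proof.
  intros phi w [H _] x y. destruct (H w x y) as [H1 [H2 H3]].
  repeat split; try assumption.
  - exact (proj2 (proj2 (H (true :: w) x y))).
  - exact (proj2 (proj2 (H (false :: w) x y))).
Qed.

Lemma Dw_supp : forall phi M, (forall x y, M < Rabs x \/ M < Rabs y -> phi x y = 0) ->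
  forall w x y, M < Rabs x \/ M < Rabs y -> Dw w phi x y = 0.
Proof.
  intros phi M HM w. induction w as [|b w IH]; intros x y Hxy.
  - apply HM, Hxy.
  - simpl. destruct b.
    + unfold dR. destruct Hxy as [Hx | Hy].
      * rewrite (Derive_ext_loc _ (fun _ => 0)). apply Derive_const.
        assert (Hd : 0 < Rabs x - M) by lra.
        exists (mkposreal _ Hd). intros t Ht. change R in t. apply IH. left.
        change (Rabs (t - x) < Rabs x - M) in Ht.
        pose proof (Rabs_triang_inv x (x - t)). replace (x - (x - t)) with t in H by ring.
        rewrite Rabs_minus_sym in Ht. lra.
      * rewrite (Derive_ext _ (fun _ => 0)). apply Derive_const.
        intro t. apply IH. right. exact Hy.
    + unfold du. destruct Hxy as [Hx | Hy].
      * rewrite (Derive_ext _ (fun _ => 0)). apply Derive_const.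
        intro t. apply IH. left. exact Hx.
      * rewrite (Derive_ext_loc _ (fun _ => 0)). apply Derive_const.
        assert (Hd : 0 < Rabs y - M) by lra.
        exists (mkposreal _ Hd). intros t Ht. change R in t. apply IH. right.
        change (Rabs (t - y) < Rabs y - M) in Ht.
        pose proof (Rabs_triang_inv y (y - t)). replace (y - (y - t)) with t in H by ring.
        rewrite Rabs_minus_sym in Ht. lra.
Qed.

Lemma line_cont1 : forall s (G : R -> R -> R) x, (forall u v, continuity_2d_pt G u v) ->
  forall t, continuous (fun t => W x t * G x (s + x * t)) t.
Proof.
  intros s G x HG t. apply (cont2_snd (fun x t => W x t * G x (s + x * t))). c2x.
Qed.

Lemma Ps_lin : forall s x (a b c : R -> R -> R),
  (forall u v, continuity_2d_pt a u v) -> (forall u v, continuity_2d_pt b u v) ->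
  (forall u v, continuity_2d_pt c u v) ->
  Ps s x (fun y => a x y - b x y + c x y) = Ps s x (a x) - Ps s x (b x) + Ps s x (c x).
Proof.
  intros s x a b c Ha Hb Hc. unfold Ps.
  assert (Ea : ex_RInt (fun t => W x t * a x (s + x * t)) (-1) 1) by
    (apply (exRI2 (fun x t => W x t * a x (s + x * t))); intros; c2x).
  assert (Eb : ex_RInt (fun t => W x t * b x (s + x * t)) (-1) 1) by
    (apply (exRI2 (fun x t => W x t * b x (s + x * t))); intros; c2x).
  assert (Ec : ex_RInt (fun t => W x t * c x (s + x * t)) (-1) 1) by
    (apply (exRI2 (fun x t => W x t * c x (s + x * t))); intros; c2x).
  rewrite (RInt_extR _ (fun t => (W x t * a x (s + x * t) - W x t * b x (s + x * t))
                              + W x t * c x (s + x * t))) by (intro; ring).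
  rewrite RInt_plusR, RInt_minusR; try assumption.
  ring. apply (ex_RInt_minus (V:=R_CompleteNormedModule)); assumption.
Qed.

Definition Ladj_c (phi : R -> R -> R) : Prop :=
  C1 phi /\ C1 (dR phi) /\ C1 (du phi).

Definition Gf (s : R) (phi : R -> R -> R) (x : R) : R :=
  Ps s x (dR phi x) - P1s s x (phi x) + Ps s x (phi x).

Lemma G_deriv : forall s phi x, Ladj_c phi ->
  is_derive (Gf s phi) x (Ps s x (Ladj phi x)).
Proof.
  intros s phi x [H0 [H1 H2]]. unfold Gf.
  assert (E : Ps s x (Ladj phi x) =
    (P1s s x (dR phi x) + Ps s x (dR (dR phi) x))
    - (P1s s x (phi x) + Ps s x (du (du phi) x) + P1s s x (dR phi x))
    + (P1s s x (phi x) + Ps s x (dR phi x))).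
  { unfold Ladj. rewrite Ps_lin. ring.
    intros; apply H1. intros; apply H2. intros; apply H0. }
  rewrite E.
  apply (isd_plus (fun r => Ps s r (dR phi r) - P1s s r (phi r)) (fun r => Ps s r (phi r))).
  apply (isd_minus (fun r => Ps s r (dR phi r)) (fun r => P1s s r (phi r))).
  apply DA, H1. apply DB; assumption. apply DA, H0.
Qed.

Lemma G_supp : forall s phi M x, (forall x y, M < Rabs x -> phi x y = 0 /\ dR phi x y = 0) ->
  M < Rabs x -> Gf s phi x = 0.
Proof.
  intros s phi M x H Hx. unfold Gf.
  rewrite (Ps_ext s x (dR phi x) (fun _ => 0)) by (intro; apply H, Hx).
  rewrite (P1s_ext s x (phi x) (fun _ => 0)) by (intro; apply H, Hx).
  rewrite (Ps_ext s x (phi x) (fun _ => 0)) by (intro; apply H, Hx).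
  rewrite Ps_zero, P1s_zero. ring.
Qed.

Lemma INT0 : forall (G g : R -> R) M, (forall x, is_derive G x (g x)) -> (forall x, continuous g x) ->
  (forall x, M < Rabs x -> G x = 0) -> int_R g = 0.
Proof.
  intros G g M Hd Hc Hs. unfold int_R.
  replace g with (Derive G) by (apply functional_extensionality; intro; apply is_derive_unique, Hd).
  apply is_RInt_gen_unique. replace 0 with (0 - 0) by ring.
  apply is_RInt_gen_Derive.
  - apply filter_forall. intros; eexists; apply Hd.
  - apply filter_forall. intros ab y _.
    apply (continuous_ext g). intro; symmetry; apply is_derive_unique, Hd. apply Hc.
  - apply filterlim_ext_loc with (fun _ => 0). exists (- Rabs M - 1). intros x Hx.
    symmetry. apply Hs. pose proof (Rabs_pos M). rewrite Rabs_left by lra.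
    unfold Rabs at 1 in Hx. destruct Rcase_abs; lra.
    apply filterlim_const.
  - apply filterlim_ext_loc with (fun _ => 0). exists (Rabs M + 1). intros x Hx.
    symmetry. apply Hs. pose proof (Rabs_pos M). rewrite Rabs_right by lra.
    unfold Rabs at 1 in Hx. destruct Rcase_abs; lra.
    apply filterlim_const.
Qed.

Lemma Dw_cont : forall phi w x y, test2 phi -> continuity_2d_pt (Dw w phi) x y.
Proof. intros phi w x y [H _]. exact (proj2 (proj2 (H w x y))). Qed.

Lemma Ladj_cont : forall phi u v, test2 phi -> continuity_2d_pt (Ladj phi) u v.
Proof.
  intros phi u v H. unfold Ladj.
  apply continuity_2d_pt_plus. apply continuity_2d_pt_minus.
  apply (Dw_cont phi (true :: true :: nil)); auto.
  apply (Dw_cont phi (false :: false :: nil)); auto.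
  apply (Dw_cont phi (true :: nil)); auto.
Qed.

Lemma Ladj_c_test2 : forall phi, test2 phi -> Ladj_c phi.
Proof.
  intros phi H. split. apply (test2_C1 phi nil H).
  split. apply (test2_C1 phi (true :: nil) H). apply (test2_C1 phi (false :: nil) H).
Qed.

Lemma sharp_main : forall s phi, test2 phi -> dist_sharp s (Ladj phi) = 0.
Proof.
  intros s phi H. pose proof H as [Hreg [M HM]].
  unfold dist_sharp.
  rewrite (int_R_ext _ (fun x => Ps s x (Ladj phi x))).
  2: { intro x. apply pair_sharp_eq. intro u. apply (cont2_snd (Ladj phi)). apply Ladj_cont, H. }
  apply INT0 with (Gf s phi) M.
  - intro x. apply G_deriv, Ladj_c_test2, H.
  - intro x. apply Ps_cont. intros; apply Ladj_cont, H.
  - intros x Hx. apply G_supp with M. 2: exact Hx.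
    intros x' y Hx'. split.
    apply (Dw_supp phi M HM nil). auto.
    apply (Dw_supp phi M HM (true :: nil)). auto.
Qed.

Lemma schwarz_Dw : forall phi w x y, test2 phi ->
  dR (du (Dw w phi)) x y = du (dR (Dw w phi)) x y.
Proof.
  intros phi w x y H. pose proof H as [Hr _].
  unfold dR, du. apply Schwarz.
  - exists (mkposreal 1 Rlt_0_1). intros u v _ _. repeat split.
    apply (Hr w u v). apply (Hr w u v). apply (Hr (false :: w) u v). apply (Hr (true :: w) u v).
  - apply (Dw_cont phi (true :: false :: w)), H.
  - apply (Dw_cont phi (false :: true :: w)), H.
Qed.

Lemma Derive_lin3 : forall (a b c : R -> R) x, ex_derive a x -> ex_derive b x -> ex_derive c x ->
  Derive (fun t => a t - b t + c t) x = Derive a x - Derive b x + Derive c x.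
Proof.
  intros a b c x [da Ha] [db Hb] [dc Hc].
  rewrite (is_derive_unique a x da Ha), (is_derive_unique b x db Hb), (is_derive_unique c x dc Hc).
  apply is_derive_unique.
  apply (isd_plus (fun t => a t - b t) c). apply (isd_minus a b). all: assumption.
Qed.

Lemma schwarz_gen : forall (g : R -> R -> R) x y,
  (forall u v, ex_derive (fun z => g z v) u) -> (forall u v, ex_derive (fun z => g u z) v) ->
  (forall u v, ex_derive (fun z => du g z v) u) -> (forall u v, ex_derive (fun z => dR g u z) v) ->
  continuity_2d_pt (dR (du g)) x y -> continuity_2d_pt (du (dR g)) x y ->
  dR (du g) x y = du (dR g) x y.
Proof.
  intros g x y H1 H2 H3 H4 C1' C2'. unfold dR at 1, du at 2. apply Schwarz.
  - exists (mkposreal 1 Rlt_0_1). intros u v _ _. split; [apply H1|split; [apply H2| split]].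
    apply H3. apply H4.
  - exact C1'.
  - exact C2'.
Qed.

Lemma dR_Ladj : forall phi x y, test2 phi -> dR (Ladj phi) x y = Ladj (dR phi) x y.
Proof.
  intros phi x y H. pose proof H as [Hr _].
  assert (S0 : forall u v, dR (du phi) u v = du (dR phi) u v).
  { intros u v. apply schwarz_gen.
    - intros; exact (proj1 (Hr nil u0 v0)).
    - intros; exact (proj1 (proj2 (Hr nil u0 v0))).
    - intros; exact (proj1 (Hr (false :: nil) u0 v0)).
    - intros; exact (proj1 (proj2 (Hr (true :: nil) u0 v0))).
    - exact (proj2 (proj2 (Hr (true :: false :: nil) u v))).
    - exact (proj2 (proj2 (Hr (false :: true :: nil) u v))). }
  assert (S1 : dR (du (du phi)) x y = du (dR (du phi)) x y).
  { apply schwarz_gen.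
    - intros; exact (proj1 (Hr (false :: nil) u v)).
    - intros; exact (proj1 (proj2 (Hr (false :: nil) u v))).
    - intros; exact (proj1 (Hr (false :: false :: nil) u v)).
    - intros; exact (proj1 (proj2 (Hr (true :: false :: nil) u v))).
    - exact (proj2 (proj2 (Hr (true :: false :: false :: nil) x y))).
    - exact (proj2 (proj2 (Hr (false :: true :: false :: nil) x y))). }
  assert (S2 : du (dR (du phi)) x y = du (du (dR phi)) x y).
  { unfold du at 1 2. apply Derive_ext. intro t. apply S0. }
  unfold Ladj. unfold dR at 1.
  rewrite (Derive_lin3 (fun t => dR (dR phi) t y) (fun t => du (du phi) t y) (fun t => dR phi t y)).
  - fold (dR (dR (dR phi)) x y). fold (dR (du (du phi)) x y). fold (dR (dR phi) x y).
    rewrite S1, S2. reflexivity.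
  - exact (proj1 (Hr (true :: true :: nil) x y)).
  - exact (proj1 (Hr (false :: false :: nil) x y)).
  - exact (proj1 (Hr (true :: nil) x y)).
Qed.

Lemma Dw_exR : forall phi w x y, test2 phi -> ex_derive (fun t => Dw w phi t y) x.
Proof. intros phi w x y [H _]. exact (proj1 (H w x y)). Qed.
Lemma Dw_exu : forall phi w x y, test2 phi -> ex_derive (fun t => Dw w phi x t) y.
Proof. intros phi w x y [H _]. exact (proj1 (proj2 (H w x y))). Qed.

Lemma exR_comb : forall (a b c : R -> R -> R) x y, ex_derive (fun t => a t y) x ->
  ex_derive (fun t => b t y) x -> ex_derive (fun t => c t y) x ->
  ex_derive (fun t => a t y - b t y + c t y) x.
Proof.
  intros a b c x y [da Ha] [db Hb] [dc Hc]. eexists.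
  apply (isd_plus (fun t => a t y - b t y) (fun t => c t y)).
  apply (isd_minus (fun t => a t y) (fun t => b t y)). exact Ha. exact Hb. exact Hc.
Qed.
Lemma exu_comb : forall (a b c : R -> R -> R) x y, ex_derive (fun t => a x t) y ->
  ex_derive (fun t => b x t) y -> ex_derive (fun t => c x t) y ->
  ex_derive (fun t => a x t - b x t + c x t) y.
Proof.
  intros a b c x y [da Ha] [db Hb] [dc Hc]. eexists.
  apply (isd_plus (fun t => a x t - b x t) (fun t => c x t)).
  apply (isd_minus (fun t => a x t) (fun t => b x t)). exact Ha. exact Hb. exact Hc.
Qed.

Lemma C1_Ladj : forall phi, test2 phi -> C1 (Ladj phi).
Proof.
  intros phi H x y. pose proof H as [Hr _].
  split; [|split; [|split; [|split]]].
  - apply (exR_comb (dR (dR phi)) (du (du phi)) (dR phi)).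
    exact (proj1 (Hr (true :: true :: nil) x y)).
    exact (proj1 (Hr (false :: false :: nil) x y)).
    exact (proj1 (Hr (true :: nil) x y)).
  - apply (exu_comb (dR (dR phi)) (du (du phi)) (dR phi)).
    exact (proj1 (proj2 (Hr (true :: true :: nil) x y))).
    exact (proj1 (proj2 (Hr (false :: false :: nil) x y))).
    exact (proj1 (proj2 (Hr (true :: nil) x y))).
  - apply Ladj_cont, H.
  - apply continuity_2d_pt_ext with (Ladj (dR phi)).
    intros; symmetry; apply dR_Ladj, H.
    unfold Ladj. apply continuity_2d_pt_plus. apply continuity_2d_pt_minus.
    exact (proj2 (proj2 (Hr (true :: true :: true :: nil) x y))).
    exact (proj2 (proj2 (Hr (false :: false :: true :: nil) x y))).
    exact (proj2 (proj2 (Hr (true :: true :: nil) x y))).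
  - apply continuity_2d_pt_ext with
      (fun x y => du (dR (dR phi)) x y - du (du (du phi)) x y + du (dR phi) x y).
    { intros u v. symmetry.
      change (Derive (fun t => dR (dR phi) u t - du (du phi) u t + dR phi u t) v =
        du (dR (dR phi)) u v - du (du (du phi)) u v + du (dR phi) u v).
      rewrite (Derive_lin3 (fun t => dR (dR phi) u t) (fun t => du (du phi) u t) (fun t => dR phi u t)).
      reflexivity.
      exact (proj1 (proj2 (Hr (true :: true :: nil) u v))).
      exact (proj1 (proj2 (Hr (false :: false :: nil) u v))).
      exact (proj1 (proj2 (Hr (true :: nil) u v))). }
    apply continuity_2d_pt_plus. apply continuity_2d_pt_minus.
    exact (proj2 (proj2 (Hr (false :: true :: true :: nil) x y))).
    exact (proj2 (proj2 (Hr (false :: false :: false :: nil) x y))).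
    exact (proj2 (proj2 (Hr (false :: true :: nil) x y))).
Qed.

Lemma flat_main : forall s phi, test2 phi -> dist_flat s (Ladj phi) = 0.
Proof.
  intros s phi H. pose proof H as [Hreg [M HM]].
  unfold dist_flat.
  rewrite (int_R_ext _ (fun x => P1s s x (Ladj phi x) - Ps s x (Ladj phi x))).
  2: { intro x. apply pair_flat_eq. intro u. apply (cont2_snd (Ladj phi)). apply Ladj_cont, H. }
  assert (LC : Ladj_c (dR phi)).
  { split. apply (test2_C1 phi (true :: nil) H).
    split. apply (test2_C1 phi (true :: true :: nil) H). apply (test2_C1 phi (false :: true :: nil) H). }
  apply INT0 with (fun x => Ps s x (Ladj phi x) - Gf s (dR phi) x - Gf s phi x) M.
  - intro x.
    replace (P1s s x (Ladj phi x) - Ps s x (Ladj phi x)) with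
      ((P1s s x (Ladj phi x) + Ps s x (dR (Ladj phi) x)) - Ps s x (Ladj (dR phi) x)
         - Ps s x (Ladj phi x)).
    2: { rewrite (Ps_ext s x (dR (Ladj phi) x) (Ladj (dR phi) x)) by (intro; apply dR_Ladj, H). ring. }
    apply (isd_minus (fun x => Ps s x (Ladj phi x) - Gf s (dR phi) x) (Gf s phi)).
    apply (isd_minus (fun x => Ps s x (Ladj phi x)) (Gf s (dR phi))).
    apply DA, C1_Ladj, H. apply G_deriv, LC. apply G_deriv, Ladj_c_test2, H.
  - intro x. apply (continuous_minus (V:=R_NormedModule) (fun x => P1s s x (Ladj phi x)) (fun x => Ps s x (Ladj phi x))).
    apply P1s_cont. intros; apply Ladj_cont, H.
    apply Ps_cont. intros; apply Ladj_cont, H.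
  - intros x Hx.
    rewrite (G_supp s phi M x), (G_supp s (dR phi) M x); try exact Hx.
    rewrite (Ps_ext s x (Ladj phi x) (fun _ => 0)). rewrite Ps_zero. ring.
    { intro u. unfold Ladj.
      assert (Z1 : dR (dR phi) x u = 0) by exact (Dw_supp phi M HM (true :: true :: nil) x u (or_introl Hx)).
      assert (Z2 : du (du phi) x u = 0) by exact (Dw_supp phi M HM (false :: false :: nil) x u (or_introl Hx)).
      assert (Z3 : dR phi x u = 0) by exact (Dw_supp phi M HM (true :: nil) x u (or_introl Hx)).
      rewrite Z1, Z2, Z3. ring. }
    { intros x' y Hx'. split. exact (Dw_supp phi M HM (true :: nil) x' y (or_introl Hx')).
      exact (Dw_supp phi M HM (true :: true :: nil) x' y (or_introl Hx')). }
    { intros x' y Hx'. split. exact (Dw_supp phi M HM nil x' y (or_introl Hx')).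
      exact (Dw_supp phi M HM (true :: nil) x' y (or_introl Hx')). }
Qed.


Theorem theorem2p2 (s : R) :
  (* chi^sharp solves chi_RR - chi_uu - chi_R = 0 in D'(R^2) *)
  (forall phi, test2 phi -> dist_sharp s (Ladj phi) = 0) /\
  (* chi^flat solves chi_RR - chi_uu - chi_R = 0 in D'(R^2) *)
  (forall phi, test2 phi -> dist_flat s (Ladj phi) = 0) /\
  (forall psi, test1 psi ->
     (* R-derivatives of the u-pairings exist *)
     (forall R0, ex_derive (fun r => pair_sharp s r psi) R0) /\
     (forall R0, ex_derive (fun r => pair_flat s r psi) R0) /\
     (* initial data of chi^sharp at R -> 0 *)
     is_lim (fun R0 => pair_sharp s R0 psi) 0 0 /\
     is_lim (fun R0 => Derive (fun r => pair_sharp s r psi) R0) 0 (psi s) /\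
     (* initial data of chi^flat at R -> 0 *)
     is_lim (fun R0 => pair_flat s R0 psi) 0 (psi s) /\
     is_lim (fun R0 => Derive (fun r => pair_flat s r psi) R0) 0 0 /\
     (* decay as R -> -oo *)
     is_lim (fun R0 => pair_sharp s R0 psi) m_infty 0 /\
     is_lim (fun R0 => pair_flat s R0 psi) m_infty 0 /\
     (* chi^flat = chi^sharp_R - chi^sharp *)
     (forall R0, pair_flat s R0 psi
                 = Derive (fun r => pair_sharp s r psi) R0 - pair_sharp s R0 psi)).
Proof.
  split. intros phi H. apply sharp_main, H.
  split. intros phi H. apply flat_main, H.
  intros psi H. apply part3, H.
Qed.
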